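(* Consider Algorithm P-ASY-SUM-PUSH described in the context, run over a strongly connected digraph $\mathcal G$ with a column-stochastic matrix $A$ compatible with $\mathcal G$ with parameter $\bar m$, under an activation/delay sequence $(i^k,\mathbf d^k)_{k\in\mathbb N_0}$ satisfying the asynchrony model with constants $T,D$, and with an arbitrary perturbation sequence $\{\boldsymbol\epsilon^k\}_{k\in\mathbb N_0}\subset\mathbb R^n$. Let $K_1=(2I-1)T+ID$. Then there exist constants $\rho\in(0,1)$ and $C_1>0$ (depending only on $\bar m,I,T,D,|\mathcal E|$) such that for all $i\in\mathcal V$ and all $k\ge K_1-1$, $$\Big\|\mathbf y_i^{k+1}-\tfrac1I\,\mathfrak m_z^{k+1}\Big\|\le C_1\Big(\rho^k\|\mathbf z^0\|+\sum_{l=0}^k\rho^{k-l}\|\boldsymbol\epsilon^l\|\Big),$$ where $\|\mathbf z^0\|$ is the Euclidean norm of the stacked vector $(\mathbf z_1^0,\dots,\mathbf z_I^0)$. Moreover, for every $k\in\mathbb N_0$, $\mathfrak m_z^k=\sum_{i=1}^I\mathbf z_i^0+\sum_{t=0}^{k-1}\boldsymbol\epsilon^t$.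
   Context: Graph: $\mathcal G=(\mathcal V,\mathcal E)$, $\mathcal V=\{1,\dots,I\}$, is a strongly connected directed graph without self-loops; $(j,i)\in\mathcal E$ means agent $j$ can send information to agent $i$; $\mathcal N_i^{\rm in}=\{j:(j,i)\in\mathcal E\}$, $\mathcal N_i^{\rm out}=\{j:(i,j)\in\mathcal E\}$. A matrix $M=(m_{ij})\in\mathbb R^{I\times I}$ is compatible with $\mathcal G$ with parameter $\bar m\in(0,1)$ if $m_{ii}\ge\bar m$ for all $i$, $m_{ij}\ge\bar m$ for all $(j,i)\in\mathcal E$, and $m_{ij}=0$ otherwise. $A=(a_{ij})$ is compatible with $\mathcal G$ and column-stochastic ($\mathbf 1^\top A=\mathbf 1^\top$). Asynchrony model: a sequence $(i^k,\mathbf d^k)_{k\in\mathbb N_0}$ with $i^k\in\mathcal V$ and $\mathbf d^k=(d_j^k)_{j\in\mathcal N^{\rm in}_{i^k}}$ such that (i) there is an integer $T\ge1$ with $\bigcup_{t=k}^{k+T-1}\{i^t\}=\mathcal V$ for all $k\in\mathbb N_0$; (ii) there is an integer $D\ge 1$ with $0\le d_j^k\le D$ for all $k$ and $j\in\mathcal N^{\rm in}_{i^k}$. Algorithm P-ASY-SUM-PUSH. Variables: for each $i$, $\mathbf z_i\in\mathbb R^n$, $\phi_i\in\mathbb R$; for each $(j,i)\in\mathcal E$: $\boldsymbol\rho_{ij}\in\mathbb R^n$, $\sigma_{ij}\in\mathbb R$ (cumulative mass sent from $j$ to $i$), buffers $\tilde{\boldsymbol\rho}_{ij},\tilde\sigma_{ij}$,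 and an integer $\tau_{ij}$. Initialization: $\mathbf z_i^0\in\mathbb R^n$ arbitrary, $\phi_i^0=1$, $\tilde{\boldsymbol\rho}_{ij}^0=0$, $\tilde\sigma_{ij}^0=0$, $\tau_{ij}^{-1}=-D$, and $\boldsymbol\rho_{ij}^t=0$, $\sigma_{ij}^t=0$ for $t=-D,\dots,0$. At iteration $k$, with $i=i^k$: (1) $\tau_{ij}^k=\max(\tau_{ij}^{k-1},k-d_j^k)$ for $j\in\mathcal N_i^{\rm in}$; (2) $\mathbf z_i^{k+1/2}=\mathbf z_i^k+\sum_{j\in\mathcal N_i^{\rm in}}(\boldsymbol\rho_{ij}^{\tau_{ij}^k}-\tilde{\boldsymbol\rho}_{ij}^k)+\boldsymbol\epsilon^k$, $\phi_i^{k+1/2}=\phi_i^k+\sum_{j\in\mathcal N_i^{\rm in}}(\sigma_{ij}^{\tau_{ij}^k}-\tilde\sigma_{ij}^k)$; (3) $\mathbf z_i^{k+1}=a_{ii}\mathbf z_i^{k+1/2}$, $\phi_i^{k+1}=a_{ii}\phi_i^{k+1/2}$, and for $j\in\mathcal N_i^{\rm out}$: $\boldsymbol\rho_{ji}^{k+1}=\boldsymbol\rho_{ji}^k+a_{ji}\mathbf z_i^{k+1/2}$, $\sigma_{ji}^{k+1}=\sigma_{ji}^k+a_{ji}\phi_i^{k+1/2}$; (4) $\tilde{\boldsymbol\rho}_{ij}^{k+1}=\boldsymbol\rho_{ij}^{\tau_{ij}^k}$, $\tilde\sigma_{ij}^{k+1}=\sigma_{ij}^{\tau_{ij}^k}$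 for $j\in\mathcal N_i^{\rm in}$; (5) every variable not updated above keeps its value from iteration $k$ to $k+1$ (including $\tau_{i'j}^k=\tau_{i'j}^{k-1}$ for $i'\ne i^k$). Define $\mathbf y_i^k=\mathbf z_i^k/\phi_i^k$ and the total mass $\mathfrak m_z^k=\sum_{i=1}^I\mathbf z_i^k+\sum_{(j,i)\in\mathcal E}(\boldsymbol\rho_{ij}^k-\tilde{\boldsymbol\rho}_{ij}^k)$. *)

(* Defs.v *)
From Stdlib Require Import Reals ZArith Arith Lia.
Open Scope R_scope.

(* Vectors of R^n are represented as functions nat -> R; only the
   coordinates c < n are meaningful (the norm only looks at those). *)
Definition vec := nat -> R.
Definition vzero : vec := fun _ => 0.

Fixpoint rsum (N : nat) (f : nat -> R) : R :=
  match N with O => 0 | S N' => rsum N' f + f N' end.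

Fixpoint nsum (N : nat) (f : nat -> nat) : nat :=
  match N with O => 0%nat | S N' => (nsum N' f + f N')%nat end.

Definition vnorm (n : nat) (v : vec) : R := sqrt (rsum n (fun c => v c ^ 2)).

(* Graph on nodes 0..I-1: E j i = true means (j,i) is an edge (j sends to i). *)
Inductive reach (E : nat -> nat -> bool) : nat -> nat -> Prop :=
| reach_refl x : reach E x x
| reach_step x y w : E x y = true -> reach E y w -> reach E x w.

Definition is_digraph (I : nat) (E : nat -> nat -> bool) : Prop :=
  (forall i j, E j i = true -> (j < I)%nat /\ (i < I)%nat) /\
  (forall i, E i i = false).

Definition strongly_connected (I : nat) (E : nat -> nat -> bool) : Prop :=
  forall i j, (i < I)%nat -> (j < I)%nat -> reach E i j.

Definition num_edges (I : nat) (E : nat -> nat -> bool) : nat :=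
  nsum I (fun i => nsum I (fun j => if E j i then 1%nat else 0%nat)).

Definition compatible (I : nat) (E : nat -> nat -> bool) (mbar : R)
  (M : nat -> nat -> R) : Prop :=
  (forall i, (i < I)%nat -> mbar <= M i i) /\
  (forall i j, E j i = true -> mbar <= M i j) /\
  (forall i j, (i < I)%nat -> (j < I)%nat -> i <> j -> E j i = false -> M i j = 0).

Definition column_stochastic (I : nat) (M : nat -> nat -> R) : Prop :=
  forall j, (j < I)%nat -> rsum I (fun i => M i j) = 1.

(* Asynchrony model: act k = i^k, d k j = d_j^k. *)
Definition asynchrony (I T D : nat) (E : nat -> nat -> bool)
  (act : nat -> nat) (d : nat -> nat -> nat) : Prop :=
  (forall k, (act k < I)%nat) /\
  (forall k v, (v < I)%nat -> exists t, (k <= t < k + T)%nat /\ act t = v) /\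
  (forall k j, E j (act k) = true -> (d k j <= D)%nat).

Definition hist {X : Type} (x0 : X) (f : nat -> X) (t : Z) : X :=
  if (t <=? 0)%Z then x0 else f (Z.to_nat t).

(* tau_ij^{k-1}, with tau_ij^{-1} = -D *)
Definition tau_prev (D : nat) (tau : nat -> nat -> nat -> Z) (k i j : nat) : Z :=
  match k with O => (- Z.of_nat D)%Z | S k' => tau k' i j end.

(* Indexing: z k i = z_i^k, phi k i = phi_i^k,
   rho k i j = rho_ij^k, sig k i j = sigma_ij^k (defined for edges (j,i)),
   rhot, sigt the buffers, tau k i j = tau_ij^k. *)
Definition zhalf (I : nat) (E : nat -> nat -> bool) (eps : nat -> vec)
  (z : nat -> nat -> vec) (rho rhot : nat -> nat -> nat -> vec)
  (tau : nat -> nat -> nat -> Z) (k i : nat) : vec :=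
  fun c => z k i c
    + rsum I (fun j => if E j i
                       then hist vzero (fun t => rho t i j) (tau k i j) c - rhot k i j c
                       else 0)
    + eps k c.

Definition phihalf (I : nat) (E : nat -> nat -> bool)
  (phi : nat -> nat -> R) (sig sigt : nat -> nat -> nat -> R)
  (tau : nat -> nat -> nat -> Z) (k i : nat) : R :=
  phi k i + rsum I (fun j => if E j i
                             then hist 0 (fun t => sig t i j) (tau k i j) - sigt k i j
                             else 0).

(* The trajectory of P-ASY-SUM-PUSH (the variables are uniquely determined
   by z 0, the data and these equations). *)
Definition is_run (I D : nat) (E : nat -> nat -> bool) (A : nat -> nat -> R)
  (act : nat -> nat) (d : nat -> nat -> nat) (eps : nat -> vec)
  (z : nat -> nat -> vec) (phi : nat -> nat -> R)
  (rho rhot : nat -> nat -> nat -> vec) (sig sigt : nat -> nat -> nat -> R)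
  (tau : nat -> nat -> nat -> Z) : Prop :=
  (forall i, (i < I)%nat -> phi 0%nat i = 1) /\
  (forall i j, E j i = true ->
     rho 0%nat i j = vzero /\ sig 0%nat i j = 0 /\
     rhot 0%nat i j = vzero /\ sigt 0%nat i j = 0) /\
  (forall k : nat,
     let ia := act k in
     (forall j, E j ia = true ->
        tau k ia j = Z.max (tau_prev D tau k ia j) (Z.of_nat k - Z.of_nat (d k j))%Z) /\
     (forall i j, E j i = true -> i <> ia -> tau k i j = tau_prev D tau k i j) /\
     z (S k) ia = (fun c => A ia ia * zhalf I E eps z rho rhot tau k ia c) /\
     phi (S k) ia = A ia ia * phihalf I E phi sig sigt tau k ia /\
     (forall j, E ia j = true ->
        rho (S k) j ia = (fun c => rho k j ia c + A j ia * zhalf I E eps z rho rhot tau k ia c) /\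
        sig (S k) j ia = sig k j ia + A j ia * phihalf I E phi sig sigt tau k ia) /\
     (forall j, E j ia = true ->
        rhot (S k) ia j = hist vzero (fun t => rho t ia j) (tau k ia j) /\
        sigt (S k) ia j = hist 0 (fun t => sig t ia j) (tau k ia j)) /\
     (forall i, (i < I)%nat -> i <> ia -> z (S k) i = z k i /\ phi (S k) i = phi k i) /\
     (forall i j, E j i = true -> j <> ia ->
        rho (S k) i j = rho k i j /\ sig (S k) i j = sig k i j) /\
     (forall i j, E j i = true -> i <> ia ->
        rhot (S k) i j = rhot k i j /\ sigt (S k) i j = sigt k i j)).

Definition mass (I : nat) (E : nat -> nat -> bool) (z : nat -> nat -> vec)
  (rho rhot : nat -> nat -> nat -> vec) (k : nat) : vec :=
  fun c => rsum I (fun i => z k i c)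
         + rsum I (fun i => rsum I (fun j =>
              if E j i then rho k i j c - rhot k i j c else 0)).

Definition stacked_norm (I n : nat) (z0 : nat -> vec) : R :=
  sqrt (rsum I (fun i => rsum n (fun c => z0 i c ^ 2))).

(* Main.v *)
Require Import Defs.
From Stdlib Require Import Reals ZArith Arith Lia.
Open Scope R_scope.
From Stdlib Require Import Lra Bool Classical ClassicalEpsilon.


Lemma rsum_ext N f g : (forall i, (i < N)%nat -> f i = g i) -> rsum N f = rsum N g.
Proof. induction N; simpl; intros H; [reflexivity|]. rewrite IHN by (intros; apply H; lia). rewrite H by lia. reflexivity. Qed.

Lemma rsum_plus N f g : rsum N (fun i => f i + g i) = rsum N f + rsum N g.
Proof. induction N; simpl; [lra|]. rewrite IHN; lra. Qed.

Lemma rsum_minus N f g : rsum N (fun i => f i - g i) = rsum N f - rsum N g.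
Proof. induction N; simpl; [lra|]. rewrite IHN; lra. Qed.

Lemma rsum_scal N c f : rsum N (fun i => c * f i) = c * rsum N f.
Proof. induction N; simpl; [lra|]. rewrite IHN; lra. Qed.

Lemma rsum_zero N f : (forall i, (i < N)%nat -> f i = 0) -> rsum N f = 0.
Proof. intros H. rewrite (rsum_ext N f (fun _ => 0)) by auto. induction N; simpl; [lra|]. rewrite IHN; [lra|]. intros; auto. Qed.

Lemma rsum_le N f g : (forall i, (i < N)%nat -> f i <= g i) -> rsum N f <= rsum N g.
Proof. induction N; simpl; intros H; [lra|]. assert (rsum N f <= rsum N g) by (apply IHN; intros; apply H; lia). specialize (H N ltac:(lia)). lra. Qed.

Lemma rsum_nonneg N f : (forall i, (i < N)%nat -> 0 <= f i) -> 0 <= rsum N f.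
Proof. intros H. replace 0 with (rsum N (fun _ => 0)). apply rsum_le; auto. apply rsum_zero; auto. Qed.

Lemma rsum_exchange N M (f : nat -> nat -> R) :
  rsum N (fun i => rsum M (fun j => f i j)) = rsum M (fun j => rsum N (fun i => f i j)).
Proof. induction N; simpl. rewrite rsum_zero; auto. rewrite IHN. rewrite <- rsum_plus. reflexivity. Qed.

Lemma rsum_indic N a g : (a < N)%nat -> rsum N (fun j => if Nat.eqb j a then g j else 0) = g a.
Proof. induction N; simpl; intros H; [lia|]. destruct (Nat.eq_dec a N).
  - subst. rewrite Nat.eqb_refl. rewrite rsum_zero; [lra|]. intros i Hi. destruct (Nat.eqb_spec i N); [lia|auto].
  - rewrite IHN by lia. destruct (Nat.eqb_spec N a); [lia|lra]. Qed.

Lemma rsum_ge_term N f i : (forall j, (j < N)%nat -> 0 <= f j) -> (i < N)%nat -> f i <= rsum N f.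
Proof. induction N; simpl; intros H Hi; [lia|]. destruct (Nat.eq_dec i N).
  - subst. assert (0 <= rsum N f) by (apply rsum_nonneg; intros; apply H; lia). lra.
  - assert (f i <= rsum N f) by (apply IHN; [intros; apply H; lia|lia]). specialize (H N ltac:(lia)). lra. Qed.

Lemma rsum_range N m f : (m <= N)%nat -> rsum N (fun s => if Nat.ltb s m then f s else 0) = rsum m f.
Proof. induction N; simpl; intros H. assert (m = 0%nat) by lia. subst; reflexivity.
  destruct (Nat.eq_dec m (S N)). subst. simpl. rewrite rsum_ext with (g := f).
  destruct (Nat.ltb_spec N (S N)); [reflexivity|lia].
  intros i Hi. destruct (Nat.ltb_spec i (S N)); [reflexivity|lia].
  rewrite IHN by lia. destruct (Nat.ltb_spec N m); [lia|lra]. Qed.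

Lemma rsum_abs N f : Rabs (rsum N f) <= rsum N (fun i => Rabs (f i)).
Proof. induction N; simpl. rewrite Rabs_R0; lra. eapply Rle_trans. apply Rabs_triang. lra. Qed.

Lemma rsum_interval N lo hi f : (lo <= hi)%nat -> (hi <= N)%nat ->
  rsum hi f - rsum lo f = rsum N (fun s => if Nat.leb lo s && Nat.ltb s hi then f s else 0).
Proof. intros H1 H2. rewrite <- (rsum_range N hi) by lia. rewrite <- (rsum_range N lo) by lia.
  rewrite <- rsum_minus. apply rsum_ext. intros i Hi.
  destruct (Nat.ltb_spec i hi), (Nat.ltb_spec i lo), (Nat.leb_spec lo i); simpl; try lra; lia. Qed.


Fixpoint prevact (act : nat -> nat) (k i : nat) : option nat :=
  match k with O => None | S k' => if Nat.eqb (act k') i then Some k' else prevact act k' i end.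

Lemma prev_lt act k i p : prevact act k i = Some p -> (p < k)%nat /\ act p = i.
Proof. induction k; simpl; [discriminate|]. destruct (Nat.eqb_spec (act k) i).
  intros H; inversion H; subst; split; auto. intros H; destruct (IHk H); split; [lia|auto]. Qed.

Lemma prev_none act k i : prevact act k i = None -> forall s, (s < k)%nat -> act s <> i.
Proof. induction k; simpl; [lia|]. destruct (Nat.eqb_spec (act k) i); [discriminate|].
  intros H s Hs. destruct (Nat.eq_dec s k); [subst; auto|]. apply IHk; auto; lia. Qed.

Lemma prev_max act k i p : prevact act k i = Some p -> forall s, (p < s < k)%nat -> act s <> i.
Proof. induction k; simpl; [discriminate|]. destruct (Nat.eqb_spec (act k) i).
  intros H; inversion H; subst; lia.
  intros H s Hs. destruct (Nat.eq_dec s k); [subst; auto|]. apply IHk; auto; lia. Qed.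

Lemma prev_ge act k i s : act s = i -> (s < k)%nat -> exists p, prevact act k i = Some p /\ (s <= p)%nat.
Proof. induction k; simpl; [lia|]. intros Ha Hs. destruct (Nat.eqb_spec (act k) i).
  exists k; split; auto; lia. destruct (IHk Ha) as [p [H1 H2]]. destruct (Nat.eq_dec s k); [subst; tauto|lia].
  exists p; auto. Qed.

Lemma hist_nat (f : nat -> R) t : f 0%nat = 0 -> hist 0 f t = f (Z.to_nat t).
Proof. intros H; unfold hist. destruct (Z.leb_spec t 0). replace (Z.to_nat t) with 0%nat by lia. auto. auto. Qed.

Section SRun.
Variables (I D : nat) (E : nat -> nat -> bool) (A : nat -> nat -> R) (act : nat -> nat)
  (d : nat -> nat -> nat) (tau : nat -> nat -> nat -> Z).
Hypothesis Hdig : is_digraph I E.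
Hypothesis Hact : forall k, (act k < I)%nat.
Hypothesis Htau1 : forall k j, E j (act k) = true ->
  tau k (act k) j = Z.max (tau_prev D tau k (act k) j) (Z.of_nat k - Z.of_nat (d k j))%Z.
Hypothesis Htau2 : forall k i j, E j i = true -> i <> act k -> tau k i j = tau_prev D tau k i j.

Variables (x : nat -> nat -> R) (r rt : nat -> nat -> nat -> R) (e : nat -> R).

Definition hh (k : nat) : R :=
  x k (act k) + rsum I (fun j => if E j (act k)
     then hist 0 (fun t => r t (act k) j) (tau k (act k) j) - rt k (act k) j else 0) + e k.

Hypothesis Hr0 : forall i j, E j i = true -> r 0%nat i j = 0 /\ rt 0%nat i j = 0.
Hypothesis Hx : forall k, x (S k) (act k) = A (act k) (act k) * hh k.
Hypothesis Hrs : forall k j, E (act k) j = true -> r (S k) j (act k) = r k j (act k) + A j (act k) * hh k.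
Hypothesis Hrt : forall k j, E j (act k) = true ->
  rt (S k) (act k) j = hist 0 (fun t => r t (act k) j) (tau k (act k) j).
Hypothesis Hxo : forall k i, (i < I)%nat -> i <> act k -> x (S k) i = x k i.
Hypothesis Hro : forall k i j, E j i = true -> j <> act k -> r (S k) i j = r k i j.
Hypothesis Hrto : forall k i j, E j i = true -> i <> act k -> rt (S k) i j = rt k i j.

Lemma noloop i : E i i = false. Proof. apply Hdig. Qed.

Lemma L4 k i : (i < I)%nat -> x k i = match prevact act k i with Some p => A i i * hh p | None => x 0%nat i end.
Proof. intros Hi. induction k; simpl; auto. destruct (Nat.eqb_spec (act k) i).
  subst. apply Hx. rewrite Hxo; auto. Qed.

Lemma L2 t i j : E j i = true -> r t i j = rsum t (fun s => if Nat.eqb (act s) j then A i j * hh s else 0).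
Proof. intros He. induction t; simpl. apply Hr0; auto. destruct (Nat.eqb_spec (act t) j).
  subst. rewrite Hrs by auto. rewrite IHt. reflexivity.
  rewrite Hro by auto. rewrite IHt; lra. Qed.

Lemma Ltau_ge k i j : E j i = true -> (tau_prev D tau k i j <= tau k i j)%Z.
Proof. intros He. destruct (Nat.eq_dec i (act k)). subst. rewrite Htau1 by auto. lia.
  rewrite Htau2 by auto. lia. Qed.

Lemma Ltau_le k i j : E j i = true -> (tau k i j <= Z.of_nat k)%Z /\ (tau_prev D tau k i j <= Z.of_nat k)%Z.
Proof. intros He. induction k.
  - assert (tau_prev D tau 0 i j <= 0)%Z by (simpl; lia). split; auto.
    destruct (Nat.eq_dec i (act 0)). subst. rewrite Htau1 by auto. lia. rewrite Htau2 by auto. lia.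
  - assert (Hp : (tau_prev D tau (S k) i j <= Z.of_nat (S k))%Z) by (simpl; lia). split; auto.
    destruct (Nat.eq_dec i (act (S k))). subst. rewrite Htau1 by auto. lia. rewrite Htau2 by auto. lia. Qed.

Lemma L3 k i j : E j i = true -> rt k i j = r (Z.to_nat (tau_prev D tau k i j)) i j.
Proof. intros He. induction k.
  - simpl. replace (Z.to_nat (- Z.of_nat D)) with 0%nat by lia. destruct (Hr0 i j He); lra.
  - simpl. destruct (Nat.eq_dec i (act k)). subst. rewrite Hrt by auto. apply hist_nat. apply Hr0; auto.
    rewrite Hrto by auto. rewrite IHk. rewrite Htau2 by auto. reflexivity. Qed.

Definition lo k i j := Z.to_nat (tau_prev D tau k i j).
Definition hi k i j := Z.to_nat (tau k i j).

Definition W (k s : nat) : R :=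
  (match prevact act k (act k) with Some p => if Nat.eqb p s then A (act k) (act k) else 0 | None => 0 end)
  + (if E (act s) (act k) && Nat.leb (lo k (act k) (act s)) s && Nat.ltb s (hi k (act k) (act s))
     then A (act k) (act s) else 0).

Definition base (k : nat) : R :=
  match prevact act k (act k) with Some _ => 0 | None => x 0%nat (act k) end.

Lemma L5 k : hh k = base k + rsum k (fun s => W k s * hh s) + e k.
Proof.
  set (i := act k). unfold hh at 1. fold i. rewrite (L4 k i) by apply Hact.
  assert (Hedge : rsum I (fun j => if E j i then hist 0 (fun t => r t i j) (tau k i j) - rt k i j else 0)
     = rsum k (fun s => (if E (act s) i && Nat.leb (lo k i (act s)) s && Nat.ltb s (hi k i (act s))
     then A i (act s) else 0) * hh s)).
  { transitivity (rsum I (fun j => rsum k (fun s => if Nat.eqb j (act s) then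
       (if E (act s) i && Nat.leb (lo k i (act s)) s && Nat.ltb s (hi k i (act s)) then A i (act s) else 0) * hh s else 0))).
    - apply rsum_ext. intros j Hj. destruct (E j i) eqn:He.
      + rewrite hist_nat by (apply Hr0; auto). rewrite L3 by auto. rewrite !(L2 _ i j He).
        destruct (Ltau_le k i j He). pose proof (Ltau_ge k i j He).
        rewrite (rsum_interval k). apply rsum_ext. intros s Hs.
        destruct (Nat.eqb_spec (act s) j); destruct (Nat.eqb_spec j (act s)); try lia.
        subst j. rewrite He. unfold lo, hi. simpl. destruct (Nat.leb _ s && Nat.ltb s _); simpl; lra.
        destruct (Nat.leb _ s && Nat.ltb s _); simpl; lra.
        lia. lia.
      + symmetry. apply rsum_zero. intros s Hs. destruct (Nat.eqb_spec j (act s)); auto. subst j. rewrite He. simpl. lra.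
    - rewrite rsum_exchange. apply rsum_ext. intros s Hs.
      rewrite (rsum_indic I (act s) (fun _ => _)) by apply Hact. reflexivity. }
  rewrite Hedge. unfold base, W. fold i.
  destruct (prevact act k i) as [p|] eqn:Hp.
  - destruct (prev_lt _ _ _ _ Hp) as [Hpk _].
    assert (A i i * hh p = rsum k (fun s => (if Nat.eqb p s then A i i else 0) * hh s)).
    { rewrite (rsum_ext k _ (fun s => if Nat.eqb s p then A i i * hh s else 0)).
      rewrite rsum_indic; auto. intros s Hs. destruct (Nat.eqb_spec p s), (Nat.eqb_spec s p); try lia; lra. }
    rewrite H. rewrite <- rsum_plus. rewrite (rsum_ext k _ (fun s0 => ((if Nat.eqb p s0 then A i i else 0) +
      (if E (act s0) i && Nat.leb (lo k i (act s0)) s0 && Nat.ltb s0 (hi k i (act s0)) then A i (act s0) else 0)) * hh s0)).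
    lra. intros; lra.
  - f_equal. f_equal. apply rsum_ext; intros; lra.
Qed.

Definition massS k := rsum I (fun i => x k i) + rsum I (fun i => rsum I (fun j => if E j i then r k i j - rt k i j else 0)).

Hypothesis Hcol : forall j, (j < I)%nat -> rsum I (fun i => A i j) = 1.
Hypothesis Hcz : forall i j, (i < I)%nat -> (j < I)%nat -> i <> j -> E j i = false -> A i j = 0.

Lemma rsum_if_const N (b : bool) f : rsum N (fun j => if b then f j else 0) = if b then rsum N f else 0.
Proof. destruct b; auto. apply rsum_zero; auto. Qed.

Lemma L6 k : massS (S k) = massS k + e k.
Proof.
  set (ia := act k). unfold massS.
  assert (Hx1 : rsum I (fun i => x (S k) i) = rsum I (fun i => x k i) + (A ia ia * hh k - x k ia)).
  { rewrite (rsum_ext I _ (fun i => x k i + (if Nat.eqb i ia then A ia ia * hh k - x k ia else 0))).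
    rewrite rsum_plus. rewrite (rsum_indic I ia (fun _ => _)) by apply Hact. reflexivity.
    intros i Hi. destruct (Nat.eqb_spec i ia). subst. unfold ia. rewrite Hx. lra.
    rewrite Hxo by auto. lra. }
  set (Y := rsum I (fun j => if E j ia then hist 0 (fun t => r t ia j) (tau k ia j) - rt k ia j else 0)).
  assert (Hy : rsum I (fun i => rsum I (fun j => if E j i then r (S k) i j - rt (S k) i j else 0))
     = rsum I (fun i => rsum I (fun j => if E j i then r k i j - rt k i j else 0))
       + rsum I (fun i => if E ia i then A i ia * hh k else 0) - Y).
  { rewrite (rsum_ext I _ (fun i => rsum I (fun j => if E j i then r k i j - rt k i j else 0)
        + (if E ia i then A i ia * hh k else 0)
        - (if Nat.eqb i ia then Y else 0))).
    rewrite rsum_minus, rsum_plus. rewrite (rsum_indic I ia (fun _ => Y)) by apply Hact. reflexivity.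
    intros i Hi.
    rewrite (rsum_ext I _ (fun j => (if E j i then r k i j - rt k i j else 0)
        + (if Nat.eqb j ia then (if E j i then A i ia * hh k else 0) else 0)
        - (if Nat.eqb i ia then (if E j ia then hist 0 (fun t => r t ia j) (tau k ia j) - rt k ia j else 0) else 0))).
    rewrite rsum_minus, rsum_plus. rewrite (rsum_indic I ia (fun j => if E j i then _ else 0)) by apply Hact.
    rewrite rsum_if_const. unfold Y. destruct (Nat.eqb_spec i ia); [subst; reflexivity|]. lra.
    intros j Hj. destruct (E j i) eqn:He.
    - destruct (Nat.eqb_spec j ia), (Nat.eqb_spec i ia).
      + subst. rewrite noloop in He. discriminate.
      + subst j. unfold ia in *. rewrite Hrs by auto. rewrite Hrto by auto. lra.
      + subst i. unfold ia in *. rewrite Hro by auto. rewrite Hrt by auto. rewrite He. lra.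
      + rewrite Hro, Hrto by auto. lra.
    - destruct (Nat.eqb_spec j ia), (Nat.eqb_spec i ia); try subst; try rewrite He; lra. }
  rewrite Hx1, Hy.
  assert (Hh : hh k = x k ia + Y + e k) by reflexivity.
  assert (Hs : A ia ia + rsum I (fun i => if E ia i then A i ia else 0) = 1).
  { rewrite <- (Hcol ia) by apply Hact.
    rewrite (rsum_ext I (fun i => A i ia) (fun i => (if Nat.eqb i ia then A ia ia else 0) + (if E ia i then A i ia else 0))).
    rewrite rsum_plus. rewrite (rsum_indic I ia (fun _ => _)) by apply Hact. reflexivity.
    intros i Hi. destruct (Nat.eqb_spec i ia). subst. rewrite noloop. lra.
    destruct (E ia i) eqn:He. lra. rewrite Hcz; auto. lra. apply Hact. }
  rewrite (rsum_ext I (fun i => if E ia i then A i ia * hh k else 0) (fun i => (if E ia i then A i ia else 0) * hh k))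
    by (intros; destruct (E ia i); lra).
  rewrite (rsum_ext I (fun i => (if E ia i then A i ia else 0) * hh k) (fun i => hh k * (if E ia i then A i ia else 0)))
    by (intros; lra).
  rewrite rsum_scal. 
  assert (A ia ia * hh k + hh k * rsum I (fun i => if E ia i then A i ia else 0) = hh k).
  { rewrite <- Rmult_1_r. rewrite <- Hs. ring. }
  lra.
Qed.

Definition Wm (k s : nat) : R :=
  (match prevact act k (act s) with Some p => if Nat.eqb p s then A (act s) (act s) else 0 | None => 0 end)
  + rsum I (fun i => if E (act s) i && Nat.leb (lo k i (act s)) s then A i (act s) else 0).

Definition basem (k : nat) : R :=
  rsum I (fun i => match prevact act k i with Some _ => 0 | None => x 0%nat i end).

Lemma L7 k : massS k = basem k + rsum k (fun s => Wm k s * hh s).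
Proof.
  unfold massS, basem, Wm.
  rewrite (rsum_ext I (fun i => x k i) (fun i => (match prevact act k i with Some _ => 0 | None => x 0%nat i end)
     + rsum k (fun s => (match prevact act k i with Some p => if Nat.eqb p s then A i i else 0 | None => 0 end) * hh s))).
  2:{ intros i Hi. rewrite L4 by auto. destruct (prevact act k i) as [p|] eqn:Hp.
      destruct (prev_lt _ _ _ _ Hp) as [Hpk _].
      + rewrite (rsum_ext k _ (fun s => if Nat.eqb s p then A i i * hh s else 0)).
        * rewrite rsum_indic by auto. lra.
        * intros s Hs. destruct (Nat.eqb_spec p s), (Nat.eqb_spec s p); try lia; lra.
      + rewrite rsum_zero; [lra|]. intros; lra. }
  rewrite rsum_plus. rewrite rsum_exchange.
  rewrite (rsum_ext I (fun i => rsum I (fun j => if E j i then r k i j - rt k i j else 0))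
    (fun i => rsum I (fun j => rsum k (fun s => if Nat.eqb j (act s) then
       (if E (act s) i && Nat.leb (lo k i (act s)) s then A i (act s) else 0) * hh s else 0)))).
  2:{ intros i Hi. apply rsum_ext. intros j Hj. destruct (E j i) eqn:He.
      - rewrite L3 by auto. rewrite !(L2 _ i j He). destruct (Ltau_le k i j He).
        rewrite (rsum_interval k). apply rsum_ext. intros s Hs.
        destruct (Nat.eqb_spec (act s) j); destruct (Nat.eqb_spec j (act s)); try lia.
        subst j. rewrite He. unfold lo. simpl. destruct (Nat.ltb_spec s k); [|lia].
        destruct (Nat.leb _ s); simpl; lra.
        destruct (Nat.leb _ s && Nat.ltb s k); simpl; lra. lia. lia.
      - symmetry. apply rsum_zero. intros s Hs. destruct (Nat.eqb_spec j (act s)); auto. subst j. rewrite He. simpl. lra. }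
  rewrite (rsum_ext I (fun i => rsum I _) (fun i => rsum k (fun s => (if E (act s) i && Nat.leb (lo k i (act s)) s then A i (act s) else 0) * hh s))).
  2:{ intros i Hi. rewrite rsum_exchange. apply rsum_ext. intros s Hs.
      rewrite (rsum_indic I (act s) (fun _ => _)) by apply Hact. reflexivity. }
  rewrite (rsum_exchange I k (fun i s => (if E (act s) i && Nat.leb (lo k i (act s)) s then A i (act s) else 0) * hh s)). rewrite Rplus_assoc. f_equal. rewrite <- rsum_plus. apply rsum_ext. intros s Hs.
  rewrite (rsum_ext I (fun i => (if E (act s) i && _ then _ else 0) * hh s) (fun i => hh s * (if E (act s) i && Nat.leb (lo k i (act s)) s then A i (act s) else 0))) by (intros; lra).
  rewrite rsum_scal.
  rewrite (rsum_ext I (fun i => _ * hh s) (fun i => if Nat.eqb i (act s) then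
     (match prevact act k (act s) with Some p => if Nat.eqb p s then A (act s) (act s) else 0 | None => 0 end) * hh s else 0)).
  rewrite (rsum_indic I (act s) (fun _ => _)) by apply Hact. lra.
  intros i Hi. destruct (prevact act k i) as [p|] eqn:Hp.
  - destruct (Nat.eqb_spec p s).
    + subst p. destruct (prev_lt _ _ _ _ Hp) as [_ Ha]. subst i. rewrite Nat.eqb_refl, Hp, Nat.eqb_refl. reflexivity.
    + destruct (Nat.eqb_spec i (act s)). subst i. rewrite Hp. destruct (Nat.eqb_spec p s); [lia|lra]. lra.
  - destruct (Nat.eqb_spec i (act s)). subst i. rewrite Hp. lra. lra.
Qed.

End SRun.


Lemma Rdiv_le_0_compat a b : 0 <= a -> 0 < b -> 0 <= a / b.
Proof. intros. unfold Rdiv. apply Rmult_le_pos; auto. left; apply Rinv_0_lt_compat; auto. Qed.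

Lemma strong_ind (Pr : nat -> Prop) : (forall k, (forall s, (s < k)%nat -> Pr s) -> Pr k) -> forall k, Pr k.
Proof. intros H k. assert (forall n s, (s < n)%nat -> Pr s). { induction n; intros s Hs; [lia|]. apply H. intros; apply IHn; lia. }
  apply (H0 (S k)); lia. Qed.

Lemma min_bool_aux (f : nat -> bool) n : (exists m, (m <= n)%nat /\ f m = true /\ forall q, (q < m)%nat -> f q = false)
  \/ (forall q, (q <= n)%nat -> f q = false).
Proof. induction n.
  - destruct (f 0%nat) eqn:H. left. exists 0%nat. split; [lia|split; auto; intros; lia]. right. intros q Hq. replace q with 0%nat by lia. auto.
  - destruct IHn as [[m [H1 [H2 H3]]]|H]. left; exists m; split; [lia|auto].
    destruct (f (S n)) eqn:Hf. left. exists (S n); split; [lia|split; auto]. intros q Hq; apply H; lia.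
    right. intros q Hq. destruct (Nat.eq_dec q (S n)); [subst; auto|apply H; lia]. Qed.

Lemma min_bool (f : nat -> bool) n : f n = true -> exists m, (m <= n)%nat /\ f m = true /\ forall q, (q < m)%nat -> f q = false.
Proof. intros H. destruct (min_bool_aux f n) as [X|X]; auto. rewrite X in H; [discriminate|lia]. Qed.

Lemma rsum_shift m n g : rsum (m + n) g = rsum m g + rsum n (fun j => g (m + j)%nat).
Proof. induction n; simpl. rewrite Nat.add_0_r; lra. rewrite Nat.add_succ_r. simpl. rewrite IHn. lra. Qed.

Lemma rsum_const n c : rsum n (fun _ => c) = INR n * c.
Proof. induction n; simpl. lra. rewrite IHn. destruct n; simpl; lra. Qed.

Lemma rsum_window k B c g : (0 <= c) -> (forall s, (s + B < k)%nat -> g s = 0) ->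
  (forall s, (s < k)%nat -> (k <= s + B)%nat -> g s <= c) -> rsum k g <= INR B * c.
Proof. intros Hc H0 H1. destruct (le_lt_dec B k).
  - replace k with ((k - B) + B)%nat by lia. rewrite rsum_shift. rewrite rsum_zero. 
    rewrite <- rsum_const. rewrite Rplus_0_l. apply rsum_le. intros j Hj. apply H1; lia. intros s Hs. apply H0; lia.
  - apply Rle_trans with (INR k * c). rewrite <- rsum_const. apply rsum_le. intros; apply H1; lia.
    apply Rmult_le_compat_r; auto. apply le_INR; lia. Qed.

Lemma pow_le_one' (m : R) n : 0 <= m <= 1 -> m ^ n <= 1.
Proof. intros H. induction n; simpl. lra. assert (0 <= m ^ n) by (apply pow_le; lra). nra. Qed.

Lemma pow_le1 (m : R) a b : 0 <= m <= 1 -> (a <= b)%nat -> m ^ b <= m ^ a.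
Proof. intros Hm Hab. replace b with (a + (b - a))%nat by lia. rewrite pow_add.
  assert (0 <= m ^ a) by (apply pow_le; lra). assert (m ^ (b - a) <= 1) by (apply pow_le_one'; lra).
  assert (0 <= m ^ (b-a)) by (apply pow_le; lra). nra. Qed.

Section Kern.
Variables (I T D : nat) (mbar : R) (E : nat -> nat -> bool) (A : nat -> nat -> R) (act : nat -> nat)
  (d : nat -> nat -> nat) (tau : nat -> nat -> nat -> Z).
Hypothesis Hdig : is_digraph I E.
Hypothesis Hsc : strongly_connected I E.
Hypothesis HI1 : (1 <= I)%nat.
Hypothesis HT1 : (1 <= T)%nat.
Hypothesis Hmb : 0 < mbar < 1.
Hypothesis Hact : forall k, (act k < I)%nat.
Hypothesis Hwin : forall k v, (v < I)%nat -> exists t, (k <= t < k + T)%nat /\ act t = v.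
Hypothesis Hdel : forall k j, E j (act k) = true -> (d k j <= D)%nat.
Hypothesis Htau1 : forall k j, E j (act k) = true ->
  tau k (act k) j = Z.max (tau_prev D tau k (act k) j) (Z.of_nat k - Z.of_nat (d k j))%Z.
Hypothesis Htau2 : forall k i j, E j i = true -> i <> act k -> tau k i j = tau_prev D tau k i j.
Hypothesis Hcomp : compatible I E mbar A.
Hypothesis Hcs : column_stochastic I A.

Notation W := (W D E A act tau).
Notation Wm := (Wm I D E A act tau).
Notation lo := (lo D tau).
Notation hi := (hi tau).

Lemma Ltp_eq k i j : E j i = true ->
  tau_prev D tau k i j = match prevact act k i with Some p => tau p i j | None => (- Z.of_nat D)%Z end.
Proof. intros He. induction k; simpl; auto. destruct (Nat.eqb_spec (act k) i). subst; auto.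
  rewrite Htau2 by auto. auto. Qed.

Lemma tau_act_ge p j : E j (act p) = true -> (Z.of_nat p - Z.of_nat D <= tau p (act p) j)%Z.
Proof. intros He. rewrite Htau1 by auto. pose proof (Hdel p j He). lia. Qed.

Lemma prev_recent k i : (T <= k)%nat -> (i < I)%nat -> exists p, prevact act k i = Some p /\ (k <= p + T)%nat.
Proof. intros Hk Hi. destruct (Hwin (k - T) i Hi) as [t [Ht Ha]].
  destruct (prev_ge act k i t Ha ltac:(lia)) as [p [Hp Hp2]]. exists p; split; auto; lia. Qed.

Lemma lo_recent k i j : (T <= k)%nat -> (i < I)%nat -> E j i = true -> (k <= lo k i j + T + D)%nat.
Proof. intros Hk Hi He. destruct (prev_recent k i Hk Hi) as [p [Hp Hpk]]. unfold lo.
  rewrite Ltp_eq by auto. rewrite Hp. destruct (prev_lt _ _ _ _ Hp) as [_ Ha]. subst i.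
  pose proof (tau_act_ge p j He). lia. Qed.

Lemma A_nn i j : (i < I)%nat -> (j < I)%nat -> 0 <= A i j.
Proof. intros Hi Hj. destruct Hcomp as [H1 [H2 H3]]. destruct (Nat.eq_dec i j). subst. specialize (H1 j Hj); lra.
  destruct (E j i) eqn:He. specialize (H2 i j He); lra. rewrite H3; auto; lra. Qed.

Lemma A_le1 i j : (i < I)%nat -> (j < I)%nat -> A i j <= 1.
Proof. intros Hi Hj. rewrite <- (Hcs j Hj). apply (rsum_ge_term I (fun i => A i j)); auto. intros; apply A_nn; auto. Qed.

Lemma W_nn k s : 0 <= W k s.
Proof. unfold W. assert (0 <= A (act k) (act k)) by (apply A_nn; auto).
  assert (0 <= A (act k) (act s)) by (apply A_nn; auto).
  destruct (prevact act k (act k)); [destruct (Nat.eqb _ s)|]; destruct (_ && _ && _); lra. Qed.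

Lemma W_prev k p : prevact act k (act k) = Some p -> mbar <= W k p.
Proof. intros Hp. unfold W. rewrite Hp, Nat.eqb_refl. destruct Hcomp as [H1 _].
  specialize (H1 (act k) (Hact k)). assert (0 <= A (act k) (act p)) by (apply A_nn; auto).
  destruct (_ && _ && _); lra. Qed.

Lemma W_pack k s : E (act s) (act k) = true -> (lo k (act k) (act s) <= s)%nat -> (s < hi k (act k) (act s))%nat ->
  mbar <= W k s.
Proof. intros H1 H2 H3. unfold W. rewrite H1. apply Nat.leb_le in H2. apply Nat.ltb_lt in H3. rewrite H2, H3. simpl.
  destruct Hcomp as [_ [H _]]. specialize (H _ _ H1). assert (0 <= A (act k) (act k)) by (apply A_nn; auto).
  destruct (prevact act k (act k)); [destruct (Nat.eqb _ s)|]; lra. Qed.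

Lemma W_zero k s : (T <= k)%nat -> (s + T + D < k)%nat -> W k s = 0.
Proof. intros Hk Hs. unfold W. destruct (prev_recent k (act k) Hk (Hact k)) as [p [Hp Hpk]]. rewrite Hp.
  destruct (Nat.eqb_spec p s); [lia|]. destruct (E (act s) (act k)) eqn:He; simpl; [|lra].
  pose proof (lo_recent k (act k) (act s) Hk (Hact k) He). destruct (Nat.leb_spec (lo k (act k) (act s)) s); simpl; lra || lia. Qed.

Lemma Wm_nn k s : 0 <= Wm k s.
Proof. unfold Wm. assert (0 <= A (act s) (act s)) by (apply A_nn; auto).
  assert (0 <= rsum I (fun i => if E (act s) i && Nat.leb (lo k i (act s)) s then A i (act s) else 0)).
  { apply rsum_nonneg. intros i Hi. destruct (_ && _). apply A_nn; auto. lra. }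
  destruct (prevact act k (act s)); [destruct (Nat.eqb _ s)|]; lra. Qed.

Lemma Wm_le k s : Wm k s <= 1 + INR I.
Proof. unfold Wm. assert (A (act s) (act s) <= 1) by (apply A_le1; auto).
  assert (rsum I (fun i => if E (act s) i && Nat.leb (lo k i (act s)) s then A i (act s) else 0) <= INR I).
  { replace (INR I) with (INR I * 1) by lra. rewrite <- rsum_const. apply rsum_le. intros i Hi. destruct (_ && _). apply A_le1; auto. lra. }
  destruct (prevact act k (act s)); [destruct (Nat.eqb _ s)|]; lra. Qed.

Lemma Wm_zero k s : (T <= k)%nat -> (s + T + D < k)%nat -> Wm k s = 0.
Proof. intros Hk Hs. unfold Wm. destruct (prev_recent k (act s) Hk (Hact s)) as [p [Hp Hpk]]. rewrite Hp.
  destruct (Nat.eqb_spec p s); [lia|]. rewrite rsum_zero. lra. intros i Hi.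
  destruct (E (act s) i) eqn:He; simpl; [|lra].
  pose proof (lo_recent k i (act s) Hk Hi He). destruct (Nat.leb_spec (lo k i (act s)) s); simpl; lra || lia. Qed.

Lemma colsum ia : (ia < I)%nat -> A ia ia + rsum I (fun i => if E ia i then A i ia else 0) = 1.
Proof. intros Hia. rewrite <- (Hcs ia) by auto. destruct Hcomp as [_ [_ Hcz]].
  rewrite (rsum_ext I (fun i => A i ia) (fun i => (if Nat.eqb i ia then A ia ia else 0) + (if E ia i then A i ia else 0))).
  rewrite rsum_plus. rewrite (rsum_indic I ia (fun _ => _)) by auto. reflexivity.
  intros i Hi. destruct (Nat.eqb_spec i ia). subst. rewrite (proj2 Hdig). lra.
  destruct (E ia i) eqn:He. lra. rewrite Hcz; auto. lra. Qed.

Lemma Wm_self k : Wm (S k) k = 1.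
Proof. unfold Wm. simpl. rewrite Nat.eqb_refl, Nat.eqb_refl. rewrite <- (colsum (act k) (Hact k)). f_equal.
  apply rsum_ext. intros i Hi. destruct (E (act k) i) eqn:He; simpl; auto.
  unfold lo. simpl. destruct (Ltau_le D E act d tau Htau1 Htau2 k i (act k) He).
  destruct (Nat.leb_spec (Z.to_nat (tau k i (act k))) k); auto. lia. Qed.


Lemma ClaimA (G : nat -> R) s0 c : (forall t s, (s0 <= s < t)%nat -> W t s * G s <= G t) -> 0 <= c ->
  forall s t, (s0 <= s <= t)%nat -> act s = act t -> c <= G s -> c * mbar ^ (t - s) <= G t.
Proof. intros HG Hc s t. revert t. apply (strong_ind (fun t => (s0 <= s <= t)%nat -> act s = act t -> c <= G s -> c * mbar ^ (t - s) <= G t)).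
  intros t IH Hst Ha Hs. destruct (Nat.eq_dec s t). subst. rewrite Nat.sub_diag. simpl. lra.
  destruct (prev_ge act t (act t) s Ha ltac:(lia)) as [p [Hp Hsp]]. destruct (prev_lt _ _ _ _ Hp) as [Hpt Hap].
  assert (Hgp : c * mbar ^ (p - s) <= G p) by (apply IH; auto; lia).
  assert (HW := W_prev t p Hp). assert (HGt := HG t p ltac:(lia)).
  assert (0 <= mbar ^ (p - s)) by (apply pow_le; lra).
  assert (mbar ^ (t - s) <= mbar ^ (S (p - s))) by (apply pow_le1; [lra|lia]). simpl in H0.
  assert (0 <= c * mbar ^ (p - s)) by nra. nra. Qed.

Lemma ClaimB (G : nat -> R) s0 c : (forall t s, (s0 <= s < t)%nat -> W t s * G s <= G t) -> 0 <= c ->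
  forall s t, (s0 <= s)%nat -> E (act s) (act t) = true -> (s + 1 + D <= t)%nat -> c <= G s -> c * mbar ^ (t - s) <= G t.
Proof. intros HG Hc s t Hs0 He Hst Hcs0. set (j := act t). set (i := act s).
  set (f := fun q => Nat.eqb (act q) j && Nat.ltb s (hi q j i)).
  assert (Hft : f t = true). { unfold f. rewrite Nat.eqb_refl. simpl. apply Nat.ltb_lt. unfold hi.
    pose proof (tau_act_ge t i He). unfold j. lia. }
  destruct (min_bool f t Hft) as [m [Hmt [Hfm Hmin]]]. unfold f in Hfm. apply andb_true_iff in Hfm. destruct Hfm as [Ham Hhm].
  apply Nat.eqb_eq in Ham. apply Nat.ltb_lt in Hhm.
  assert (Hij : E i j = true) by exact He.
  assert (Hsm : (s < m)%nat). { unfold hi in Hhm. destruct (Ltau_le D E act d tau Htau1 Htau2 m j i Hij). lia. }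
  assert (Hlo : (lo m j i <= s)%nat). { unfold lo. rewrite Ltp_eq by auto. destruct (prevact act m j) as [p|] eqn:Hp.
    - destruct (prev_lt _ _ _ _ Hp) as [Hpm Hap]. specialize (Hmin p Hpm). unfold f in Hmin. rewrite Hap, Nat.eqb_refl in Hmin.
      simpl in Hmin. apply Nat.ltb_ge in Hmin. unfold hi in Hmin. lia.
    - lia. }
  assert (HWm : mbar <= W m s). { apply W_pack; rewrite Ham; auto. }
  assert (Gm : c * mbar <= G m). { pose proof (HG m s ltac:(lia)). assert (0 <= G s) by lra. nra. }
  assert (c * mbar * mbar ^ (t - m) <= G t). { apply (ClaimA G s0 (c * mbar)); auto; try nra; try lia. }
  assert (mbar ^ (t - s) <= mbar ^ (S (t - m))) by (apply pow_le1; [lra|lia]). simpl in H0.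
  assert (0 <= mbar ^ (t - m)) by (apply pow_le; lra). nra. Qed.

Definition Hop := (T + D + 1)%nat.

Lemma nsum_ge N f w : (w < N)%nat -> (f w <= nsum N f)%nat.
Proof. induction N; simpl; intros; [lia|]. destruct (Nat.eq_dec w N). subst; lia. specialize (IHN ltac:(lia)). lia. Qed.
Lemma nsum_mono N f g : (forall v, (v < N)%nat -> (f v <= g v)%nat) -> (nsum N f <= nsum N g)%nat.
Proof. induction N; simpl; intros H; [lia|]. specialize (IHN ltac:(intros; apply H; lia)). specialize (H N ltac:(lia)). lia. Qed.
Lemma nsum_strict N f g w : (forall v, (v < N)%nat -> (f v <= g v)%nat) -> (w < N)%nat -> (f w < g w)%nat -> (nsum N f < nsum N g)%nat.
Proof. induction N; simpl; intros H Hw Hs; [lia|]. destruct (Nat.eq_dec w N).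
  - subst. pose proof (nsum_mono N f g ltac:(intros; apply H; lia)). lia.
  - specialize (IHN ltac:(intros; apply H; lia) ltac:(lia) Hs). specialize (H N ltac:(lia)). lia. Qed.
Lemma nsum_le1 N f w : (forall v, (v < N)%nat -> (f v <= 1)%nat) -> (w < N)%nat -> f w = 0%nat -> (nsum N f < N)%nat.
Proof. intros H Hw H0. assert (nsum N f < nsum N (fun _ => 1%nat))%nat by (apply (nsum_strict N f _ w); auto; lia).
  assert (forall N, nsum N (fun _ => 1%nat) = N) by (induction N0; simpl; lia). rewrite H2 in H1. auto. Qed.

Lemma cut_edge (Rc : nat -> Prop) x y : reach E x y -> Rc x -> ~ Rc y -> exists u w, E u w = true /\ Rc u /\ ~ Rc w.
Proof. induction 1; intros H1 H2. contradiction. destruct (classic (Rc y)). apply IHreach; auto. exists x, y; auto. Qed.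

Lemma ClaimD (G : nat -> R) s0 c : (forall t s, (s0 <= s < t)%nat -> W t s * G s <= G t) -> 0 <= c ->
  forall s, (s0 <= s)%nat -> c <= G s -> forall t, (s + I * Hop <= t)%nat -> c * mbar ^ (t - s) <= G t.
Proof. intros HG Hc s Hs0 Hcs0.
  set (Rch := fun m v => exists t, (s <= t <= s + m * Hop)%nat /\ act t = v /\ c * mbar ^ (t - s) <= G t).
  assert (Hmono : forall m v, Rch m v -> Rch (S m) v). { intros m v [t [H1 H2]]. exists t. split; auto. simpl. lia. }
  assert (Hstep : forall m, (forall v, (v < I)%nat -> Rch m v) \/ (exists w, (w < I)%nat /\ ~ Rch m w /\ Rch (S m) w)).
  { intros m. destruct (classic (forall v, (v < I)%nat -> Rch m v)) as [|Hn]; [left; auto|right].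
    apply not_all_ex_not in Hn. destruct Hn as [v Hv]. apply imply_to_and in Hv. destruct Hv as [Hv Hnv].
    assert (Hr0 : Rch m (act s)). { exists s. split; [lia|split; auto]. rewrite Nat.sub_diag; simpl; lra. }
    destruct (cut_edge (Rch m) (act s) v (Hsc _ _ (Hact s) Hv) Hr0 Hnv) as [u [w [Huw [Hu Hw]]]].
    destruct Hu as [tu [Htu [Hau Hgu]]]. destruct (proj1 Hdig w u Huw) as [_ Hwl].
    destruct (Hwin (tu + 1 + D) w Hwl) as [t [Ht Haw]].
    exists w. split; auto. split; auto. exists t. split. unfold Hop in *. simpl. nia. split; auto.
    assert (0 <= c * mbar ^ (tu - s)) by (apply Rmult_le_pos; auto; apply pow_le; lra).
    pose proof (ClaimB G s0 _ HG H tu t ltac:(lia) ltac:(rewrite Hau, Haw; auto) ltac:(lia) Hgu).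
    rewrite Rmult_assoc, <- pow_add in H0. replace (tu - s + (t - tu))%nat with (t - s)%nat in H0 by lia. auto. }
  set (cnt := fun m => nsum I (fun v => if excluded_middle_informative (Rch m v) then 1%nat else 0%nat)).
  assert (Hcnt : forall m, (forall v, (v < I)%nat -> Rch m v) \/ (S m <= cnt m)%nat).
  { induction m.
    - right. unfold cnt. pose proof (nsum_ge I (fun v => if excluded_middle_informative (Rch 0%nat v) then 1%nat else 0%nat) (act s) (Hact s)).
      simpl in H. destruct (excluded_middle_informative (Rch 0%nat (act s))). lia.
      exfalso. apply n. exists s. split; [lia|split; auto]. rewrite Nat.sub_diag; simpl; lra.
    - destruct IHm as [Hall|Hc1]. left; intros; apply Hmono; auto.
      destruct (Hstep m) as [Hall|[w [Hw [Hn Hy]]]]. left; intros; apply Hmono; auto.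
      right. assert (cnt m < cnt (S m))%nat. { unfold cnt. apply (nsum_strict I _ _ w).
        intros v Hv. destruct (excluded_middle_informative (Rch m v)), (excluded_middle_informative (Rch (S m) v)); try lia.
        exfalso; apply n; apply Hmono; auto.
        auto. destruct (excluded_middle_informative (Rch m w)), (excluded_middle_informative (Rch (S m) w)); try lia; tauto. }
      lia. }
  assert (Hall : forall v, (v < I)%nat -> Rch I v).
  { destruct (Hcnt I) as [|Hc1]; auto. destruct (classic (forall v, (v < I)%nat -> Rch I v)) as [|Hn]; auto.
    exfalso. apply not_all_ex_not in Hn. destruct Hn as [v Hv]. apply imply_to_and in Hv. destruct Hv as [Hv Hnv].
    assert (cnt I < I)%nat. { unfold cnt. apply (nsum_le1 I _ v). intros; destruct (excluded_middle_informative _); lia. auto.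
      destruct (excluded_middle_informative _); tauto. } lia. }
  intros t Ht. destruct (Hall (act t) (Hact t)) as [tv [Htv [Hav Hgv]]].
  assert (0 <= c * mbar ^ (tv - s)) by (apply Rmult_le_pos; auto; apply pow_le; lra).
  pose proof (ClaimA G s0 _ HG H tv t ltac:(nia) Hav Hgv).
  rewrite Rmult_assoc, <- pow_add in H0. replace (tv - s + (t - tv))%nat with (t - s)%nat in H0 by lia. auto. Qed.


Lemma rsum_mono_len m n f : (m <= n)%nat -> (forall i, (i < n)%nat -> 0 <= f i) -> rsum m f <= rsum n f.
Proof. intros Hmn Hf. replace n with (m + (n - m))%nat by lia. rewrite rsum_shift.
  assert (0 <= rsum (n - m) (fun j => f (m + j)%nat)) by (apply rsum_nonneg; intros; apply Hf; lia). lra. Qed.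

Lemma base_zero k (g : nat -> R) : (T <= k)%nat -> rsum I (fun i => match prevact act k i with Some _ => 0 | None => g i end) = 0.
Proof. intros Hk. apply rsum_zero. intros i Hi. destruct (prev_recent k i Hk Hi) as [p [Hp _]]. rewrite Hp. auto. Qed.

Lemma basek_zero k (g : nat -> R) : (T <= k)%nat -> match prevact act k (act k) with Some _ => 0 | None => g (act k) end = 0.
Proof. intros Hk. destruct (prev_recent k (act k) Hk (Hact k)) as [p [Hp _]]. rewrite Hp. auto. Qed.

Variable P : nat -> R.
Hypothesis HP : forall k, P k = (match prevact act k (act k) with Some _ => 0 | None => 1 end) + rsum k (fun s => W k s * P s).
Hypothesis HmP : forall k, INR I = rsum I (fun i => match prevact act k i with Some _ => 0 | None => 1 end) + rsum k (fun s => Wm k s * P s).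

Lemma P_pos k : 0 < P k /\ mbar ^ k <= P k.
Proof. revert k. apply strong_ind. intros k IH. rewrite HP.
  assert (Hs : 0 <= rsum k (fun s => W k s * P s)). { apply rsum_nonneg. intros s Hs. pose proof (W_nn k s). destruct (IH s Hs). nra. }
  destruct (prevact act k (act k)) as [p|] eqn:Hp.
  - destruct (prev_lt _ _ _ _ Hp) as [Hpk _]. destruct (IH p Hpk) as [H1 H2].
    assert (W k p * P p <= rsum k (fun s => W k s * P s)).
    { apply (rsum_ge_term k (fun s => W k s * P s)); auto. intros q Hq. pose proof (W_nn k q). destruct (IH q Hq). nra. }
    pose proof (W_prev k p Hp). assert (mbar ^ k <= mbar ^ (S p)) by (apply pow_le1; [lra|lia]). simpl in H3.
    assert (0 <= mbar ^ p) by (apply pow_le; lra). split; nra.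
  - pose proof (pow_le_one' mbar k ltac:(lra)). split; lra. Qed.

Lemma P_neq k : P k <> 0.
Proof. destruct (P_pos k); lra. Qed.

Lemma P_dom k s : (s < k)%nat -> W k s * P s <= P k.
Proof. intros Hs. rewrite (HP k). assert (W k s * P s <= rsum k (fun s => W k s * P s)).
  { apply (rsum_ge_term k (fun s => W k s * P s)); auto. intros q Hq. pose proof (W_nn k q). destruct (P_pos q). nra. }
  destruct (prevact act k (act k)); lra. Qed.

Lemma P_le k : P k <= INR I.
Proof. rewrite (HmP (S k)). assert (0 <= rsum I (fun i => match prevact act (S k) i with Some _ => 0 | None => 1 end)).
  { apply rsum_nonneg. intros i _. destruct (prevact act (S k) i); lra. }
  assert (Wm (S k) k * P k <= rsum (S k) (fun s => Wm (S k) s * P s)).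
  { apply (rsum_ge_term (S k) (fun s => Wm (S k) s * P s)); auto. intros q Hq. pose proof (Wm_nn (S k) q). destruct (P_pos q). nra. }
  rewrite Wm_self in H0. lra. Qed.

Definition c0 := INR I / (2 * (1 + INR I) * INR (T + D)).

Lemma INR_pos n : (1 <= n)%nat -> 0 < INR n.
Proof. intros; apply lt_0_INR; lia. Qed.

Lemma c0_bounds : 0 < c0 <= 1.
Proof. unfold c0. pose proof (INR_pos I HI1). pose proof (INR_pos (T + D) ltac:(lia)).
  assert (1 <= INR (T + D)) by (apply (le_INR 1); lia). split. apply Rdiv_lt_0_compat; nra.
  apply Rmult_le_reg_r with (2 * (1 + INR I) * INR (T + D)). nra. unfold Rdiv. rewrite Rmult_assoc, Rinv_l. nra. nra. Qed.

Lemma heavy k : (T <= k)%nat -> exists h, (h < k)%nat /\ (k <= h + T + D)%nat /\ c0 <= P h.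
Proof. intros Hk. destruct (classic (exists h, (h < k)%nat /\ (k <= h + T + D)%nat /\ c0 <= P h)) as [|Hn]; auto. exfalso.
  assert (Hl : forall h, (h < k)%nat -> (k <= h + (T + D))%nat -> P h <= c0).
  { intros h H1 H2. destruct (Rle_dec (P h) c0); auto. exfalso; apply Hn. exists h. split; auto. split; [lia|lra]. }
  pose proof (HmP k). rewrite base_zero in H by auto.
  assert (rsum k (fun s => Wm k s * P s) <= INR (T + D) * ((1 + INR I) * c0)).
  { apply rsum_window. pose proof c0_bounds. pose proof (pos_INR I). nra.
    intros s Hs. rewrite Wm_zero; [lra|auto|lia].
    intros s Hs Hks. pose proof (Wm_nn k s). pose proof (Wm_le k s). pose proof (Hl s Hs Hks). destruct (P_pos s). nra. }
  unfold c0 in H0. pose proof (INR_pos I HI1). pose proof (INR_pos (T + D) ltac:(lia)).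
  replace (INR (T + D) * ((1 + INR I) * (INR I / (2 * (1 + INR I) * INR (T + D))))) with (INR I / 2) in H0 by (field; lra).
  lra. Qed.

Definition eta := c0 * mbar ^ (T + I * Hop + T + D).

Lemma eta_bounds : 0 < eta <= 1.
Proof. unfold eta. pose proof c0_bounds. pose proof (pow_le_one' mbar (T + I * Hop + T + D) ltac:(lra)).
  pose proof (pow_lt mbar (T + I * Hop + T + D) ltac:(lra)). split; nra. Qed.

Lemma P_lower k : eta <= P k.
Proof. pose proof c0_bounds. destruct (le_lt_dec (T + I * Hop) k).
  - destruct (heavy (k - I * Hop) ltac:(lia)) as [h [H1 [H2 H3]]].
    assert (c0 * mbar ^ (k - h) <= P k).
    { apply (ClaimD P 0 c0); try lra. intros t s Hts; apply P_dom; lia. lia. auto. lia. }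
    unfold eta. assert (mbar ^ (T + I * Hop + T + D) <= mbar ^ (k - h)) by (apply pow_le1; [lra|lia]). nra.
  - unfold eta. destruct (P_pos k). assert (mbar ^ (T + I * Hop + T + D) <= mbar ^ k) by (apply pow_le1; [lra|lia]).
    assert (0 <= mbar ^ (T + I * Hop + T + D)) by (apply pow_le; lra). nra. Qed.


Fixpoint omf (Ph : R) (h : nat) (k : nat) : nat -> R :=
  match k with O => fun _ => 0
  | S k' => fun s => if Nat.ltb s k' then omf Ph h k' s else
      (if Nat.ltb k' h then 0 else if Nat.eqb k' h then Ph else rsum k' (fun q => W k' q * omf Ph h k' q)) end.

Lemma omf_stable Ph h k s : (s < k)%nat -> omf Ph h k s = omf Ph h (S s) s.
Proof. induction k; intros Hs; [lia|]. simpl. destruct (Nat.ltb_spec s k). rewrite IHk by auto. reflexivity.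
  assert (s = k) by lia. subst. simpl. rewrite Nat.ltb_irrefl. reflexivity. Qed.

Definition om h t := omf (P h) h (S t) t.

Lemma om_eq h t : om h t = if Nat.ltb t h then 0 else if Nat.eqb t h then P h else rsum t (fun q => W t q * om h q).
Proof. unfold om at 1. simpl. rewrite Nat.ltb_irrefl. destruct (Nat.ltb t h); auto. destruct (Nat.eqb t h); auto.
  apply rsum_ext. intros q Hq. rewrite omf_stable by auto. reflexivity. Qed.

Lemma om_nn h t : 0 <= om h t.
Proof. revert t. apply strong_ind. intros t IH. rewrite om_eq. destruct (Nat.ltb t h). lra. destruct (Nat.eqb t h). destruct (P_pos h); lra.
  apply rsum_nonneg. intros q Hq. pose proof (W_nn t q). pose proof (IH q Hq). nra. Qed.

Lemma om_dom h t s : (h <= s < t)%nat -> W t s * om h s <= om h t.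
Proof. intros Hs. rewrite (om_eq h t). destruct (Nat.ltb_spec t h); [lia|]. destruct (Nat.eqb_spec t h); [lia|].
  apply (rsum_ge_term t (fun q => W t q * om h q)). intros q Hq. pose proof (W_nn t q). pose proof (om_nn h q). nra. lia. Qed.

Lemma om_lower h : (T <= h)%nat -> c0 <= P h -> forall t, (h + I * Hop <= t)%nat -> c0 * mbar ^ (t - h) <= om h t.
Proof. intros Hh Hc t Ht. apply (ClaimD (om h) h c0);
  [intros; apply om_dom; lia | pose proof c0_bounds; lra | lia | rewrite om_eq, Nat.ltb_irrefl, Nat.eqb_refl; auto | lia]. Qed.

Definition pert (e : nat -> R) h t := rsum (S t) (fun l => if Nat.ltb h l then Rabs (e l) / P l else 0).

Lemma pert_nn e h t : 0 <= pert e h t.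
Proof. unfold pert. apply rsum_nonneg. intros l _. destruct (Nat.ltb h l); [|lra]. destruct (P_pos l).
  apply Rdiv_le_0_compat; [apply Rabs_pos|lra]. Qed.

Lemma UB (Q e : nat -> R) h M0 : (T <= h)%nat ->
  (forall t, (T <= t)%nat -> Q t = rsum t (fun s => W t s * Q s) + e t) ->
  (forall s, (s <= h)%nat -> (h < s + (T + D))%nat -> Q s <= M0 * P s) ->
  forall t, (h < t)%nat -> Q t <= M0 * P t - om h t * (M0 - Q h / P h) + P t * pert e h t.
Proof. intros Hh HQ Hold. set (a := M0 - Q h / P h).
  set (U := fun t => M0 * P t - om h t * a + P t * pert e h t - Q t).
  assert (Ha : 0 <= a). { unfold a. destruct (P_pos h). pose proof (Hold h ltac:(lia) ltac:(lia)).
    apply Rmult_le_reg_r with (P h); auto. unfold Rdiv. rewrite Rmult_minus_distr_r, Rmult_assoc, Rinv_l; lra. }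
  assert (Hgen : forall t, (h < t)%nat -> 0 <= U t).
  { apply (strong_ind (fun t => (h < t)%nat -> 0 <= U t)). intros t IH Ht.
    assert (HoU : forall s, (s <= h)%nat -> (h < s + (T + D))%nat -> 0 <= U s).
    { intros s Hs1 Hs2. destruct (Nat.eq_dec s h).
      - subst s. unfold U. rewrite om_eq, Nat.ltb_irrefl, Nat.eqb_refl. unfold a. destruct (P_pos h).
        pose proof (pert_nn e h h). replace (M0 * P h - P h * (M0 - Q h / P h) + P h * pert e h h - Q h) with (P h * pert e h h)
          by (field; intro; lra). apply Rmult_le_pos; lra.
      - unfold U. rewrite om_eq. destruct (Nat.ltb_spec s h); [|lia]. pose proof (Hold s Hs1 Hs2).
        destruct (P_pos s). pose proof (pert_nn e h s). assert (0 <= P s * pert e h s) by (apply Rmult_le_pos; lra). lra. }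
    assert (HUs : forall s, (s < t)%nat -> 0 <= W t s * U s).
    { intros s Hs. pose proof (W_nn t s). destruct (le_lt_dec s h).
      - destruct (le_lt_dec t (s + T + D)).
        + apply Rmult_le_pos; [auto|apply HoU; lia].
        + rewrite W_zero by lia. lra.
      - apply Rmult_le_pos; [auto|apply IH; auto]. }
    assert (HtT : (T <= t)%nat) by lia.
    pose proof (HQ t HtT) as HQt. pose proof (HP t) as HPt. destruct (prev_recent t (act t) HtT (Hact t)) as [pp [Hpp0 _]]; rewrite Hpp0 in HPt.
    pose proof (om_eq h t) as Homt. destruct (Nat.ltb_spec t h); [lia|]. destruct (Nat.eqb_spec t h); [lia|].
    set (pt' := rsum t (fun l => if Nat.ltb h l then Rabs (e l) / P l else 0)).
    assert (Hpt : pert e h t = pt' + Rabs (e t) / P t). { unfold pert. simpl. destruct (Nat.ltb_spec h t); [reflexivity|lia]. }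
    assert (Hps : forall s, (s < t)%nat -> pert e h s <= pt').
    { intros s Hs. apply rsum_mono_len. lia. intros l _. destruct (Nat.ltb h l); [|lra]. destruct (P_pos l).
      apply Rdiv_le_0_compat; [apply Rabs_pos|lra]. }
    assert (Hsum : rsum t (fun s => W t s * U s) = M0 * rsum t (fun s => W t s * P s) - a * rsum t (fun s => W t s * om h s)
       + rsum t (fun s => W t s * P s * pert e h s) - rsum t (fun s => W t s * Q s)).
    { rewrite <- !rsum_scal. rewrite <- rsum_minus, <- rsum_plus, <- rsum_minus. apply rsum_ext. intros; unfold U; ring. }
    assert (Hpp : rsum t (fun s => W t s * P s * pert e h s) <= pt' * rsum t (fun s => W t s * P s)).
    { rewrite <- rsum_scal. apply rsum_le. intros s Hs. pose proof (Hps s Hs). pose proof (W_nn t s). destruct (P_pos s).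
      assert (0 <= W t s * P s) by nra. nra. }
    assert (H0U : 0 <= rsum t (fun s => W t s * U s)) by (apply rsum_nonneg; auto).
    destruct (P_pos t) as [HPp _].
    assert (Het : P t * (Rabs (e t) / P t) = Rabs (e t)) by (field; intro; lra).
    pose proof (Rle_abs (e t)).
    rewrite Rplus_0_l in HPt. unfold U. rewrite Hpt. rewrite Homt. rewrite HQt.
    rewrite Rmult_plus_distr_l, Het. rewrite <- HPt in Hpp, Hsum.
    lra. }
  intros t Ht. pose proof (Hgen t Ht). unfold U in H. fold a. lra. Qed.

Lemma argmax (f : nat -> R) a n : exists m, (a <= m <= a + n)%nat /\ forall s, (a <= s <= a + n)%nat -> f s <= f m.
Proof. induction n. exists a. split; [lia|]. intros s Hs. replace s with a by lia. lra.
  destruct IHn as [m [H1 H2]]. destruct (Rle_dec (f (a + S n)%nat) (f m)).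
  exists m. split; [lia|]. intros s Hs. destruct (Nat.eq_dec s (a + S n)). subst; auto. apply H2; lia.
  exists (a + S n)%nat. split; [lia|]. intros s Hs. destruct (Nat.eq_dec s (a + S n)). subst; lra. specialize (H2 s ltac:(lia)). lra. Qed.


Lemma div_le (q p m : R) : 0 < p -> q <= m * p -> q / p <= m.
Proof. intros Hp H. apply Rmult_le_reg_r with p; auto. unfold Rdiv. rewrite Rmult_assoc, Rinv_l; lra. Qed.

Lemma le_div (q p m : R) : 0 < p -> m * p <= q -> m <= q / p.
Proof. intros Hp H. apply Rmult_le_reg_r with p; auto. unfold Rdiv. rewrite Rmult_assoc, Rinv_l; lra. Qed.

Lemma Rabs_div_pos a b : 0 < b -> Rabs (a / b) = Rabs a / b.
Proof. intros Hb. unfold Rdiv. rewrite Rabs_mult. rewrite (Rabs_right (/ b)). auto. left; apply Rinv_0_lt_compat; auto. Qed.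

Lemma div_mono (x a b : R) : 0 <= x -> 0 < a <= b -> x / b <= x / a.
Proof. intros Hx Hab. unfold Rdiv. apply Rmult_le_compat_l; auto. apply Rinv_le_contravar; lra. Qed.

Definition BB := (T + D)%nat.
Definition LL := (I * Hop + 2 * BB)%nat.
Definition delta := c0 * mbar ^ (LL + BB) / INR I.

Lemma delta_bounds : 0 < delta <= 1.
Proof. unfold delta. pose proof c0_bounds. pose proof (pow_le_one' mbar (LL + BB) ltac:(lra)).
  pose proof (pow_lt mbar (LL + BB) ltac:(lra)). pose proof (INR_pos I HI1). assert (1 <= INR I) by (apply (le_INR 1); lia).
  split. apply Rdiv_lt_0_compat; nra. apply div_le; nra. Qed.

Lemma pert_opp e h t : pert (fun l => - e l) h t = pert e h t.
Proof. unfold pert. apply rsum_ext. intros. rewrite Rabs_Ropp. reflexivity. Qed.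

Lemma CS (Q e : nat -> R) (HQ : forall t, (T <= t)%nat -> Q t = rsum t (fun s => W t s * Q s) + e t) k0 X :
  (T + BB <= k0)%nat ->
  (forall s s', (s <= k0)%nat -> (k0 < s + 2 * BB)%nat -> (s' <= k0)%nat -> (k0 < s' + 2 * BB)%nat -> Q s / P s - Q s' / P s' <= X) ->
  forall t t', (t <= k0 + LL)%nat -> (k0 + LL < t + 2 * BB)%nat -> (t' <= k0 + LL)%nat -> (k0 + LL < t' + 2 * BB)%nat ->
  Q t / P t - Q t' / P t' <= (1 - delta) * X + 2 * rsum (S (k0 + LL)) (fun l => if Nat.ltb k0 (l + BB) then Rabs (e l) / eta else 0).
Proof. intros Hk0 HX t t' Ht1 Ht2 Ht1' Ht2'. unfold LL, BB in *.
  destruct (heavy (S k0) ltac:(lia)) as [h [Hh1 [Hh2 Hh3]]].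
  set (a0 := (h + 1 - (T + D))%nat).
  destruct (argmax (fun s => Q s / P s) a0 (h - a0)) as [sM [HM1 HM2]].
  destruct (argmax (fun s => - (Q s / P s)) a0 (h - a0)) as [sm [Hm1 Hm2]].
  set (M0 := Q sM / P sM). set (m0 := Q sm / P sm). simpl in HM2, Hm2.
  assert (Hwin' : forall s, (s <= h)%nat -> (h < s + (T + D))%nat -> m0 <= Q s / P s <= M0).
  { intros s H1 H2. split. specialize (Hm2 s ltac:(unfold a0; lia)). unfold m0; lra. apply HM2; unfold a0; lia. }
  assert (HMm : M0 - m0 <= X). { apply HX; unfold a0 in *; lia. }
  assert (Hh : (T <= h)%nat) by lia.
  assert (HQn : forall t, (T <= t)%nat -> (fun l => - Q l) t = rsum t (fun s => W t s * (fun l => - Q l) s) + (fun l => - e l) t).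
  { intros q Hq. cbv beta. rewrite (HQ q Hq). rewrite (rsum_ext q (fun s => W q s * - Q s) (fun s => -1 * (W q s * Q s))) by (intros; ring).
    rewrite rsum_scal. ring. }
  assert (Hup : forall u, (h < u)%nat -> Q u / P u <= M0 - om h u / P u * (M0 - Q h / P h) + pert e h u).
  { intros u Hu. destruct (P_pos u). apply div_le; auto. pose proof (UB Q e h M0 Hh HQ) as HU.
    assert (Q u <= M0 * P u - om h u * (M0 - Q h / P h) + P u * pert e h u).
    { apply HU; auto. intros s H1 H2. destruct (Hwin' s H1 H2). destruct (P_pos s).
      apply Rmult_le_reg_r with (/ P s). apply Rinv_0_lt_compat; auto. rewrite Rmult_assoc, Rinv_r by lra. unfold Rdiv in H3. lra. }
    replace ((M0 - om h u / P u * (M0 - Q h / P h) + pert e h u) * P u) with (M0 * P u - om h u * (M0 - Q h / P h) + P u * pert e h u)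
      by (field; repeat split; apply P_neq). auto. }
  assert (Hlow : forall u, (h < u)%nat -> m0 + om h u / P u * (Q h / P h - m0) - pert e h u <= Q u / P u).
  { intros u Hu. destruct (P_pos u). pose proof (UB (fun l => - Q l) (fun l => - e l) h (- m0) Hh HQn) as HU.
    assert (- Q u <= - m0 * P u - om h u * (- m0 - - Q h / P h) + P u * pert (fun l => - e l) h u).
    { apply HU; auto. intros s H1 H2. destruct (Hwin' s H1 H2). destruct (P_pos s).
      assert (m0 * P s <= Q s). { apply Rmult_le_reg_r with (/ P s). apply Rinv_0_lt_compat; auto.
        rewrite Rmult_assoc, Rinv_r by lra. unfold Rdiv in H3. lra. } lra. }
    rewrite pert_opp in H1. assert (Q u >= (m0 + om h u / P u * (Q h / P h - m0) - pert e h u) * P u).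
    { replace ((m0 + om h u / P u * (Q h / P h - m0) - pert e h u) * P u) with (m0 * P u + om h u * (Q h / P h - m0) - P u * pert e h u)
        by (field; repeat split; apply P_neq). unfold Rdiv in *. lra. }
    apply le_div; auto. lra. }
  set (pS := rsum (S (k0 + (I * Hop + 2 * (T + D)))) (fun l => if Nat.ltb k0 (l + (T + D)) then Rabs (e l) / eta else 0)).
  assert (Hp : forall u, (h < u)%nat -> (u <= k0 + (I * Hop + 2 * (T + D)))%nat -> pert e h u <= pS).
  { intros u Hu1 Hu2. unfold pert, pS. apply Rle_trans with (rsum (S u) (fun l => if Nat.ltb k0 (l + (T + D)) then Rabs (e l) / eta else 0)).
    apply rsum_le. intros l Hl. destruct (Nat.ltb_spec h l); [|destruct (Nat.ltb k0 _); [|lra]; apply Rdiv_le_0_compat; [apply Rabs_pos|apply eta_bounds]].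
    destruct (Nat.ltb_spec k0 (l + (T + D))); [|lia]. apply div_mono. apply Rabs_pos. split. apply eta_bounds. apply P_lower.
    apply rsum_mono_len. lia. intros l _. destruct (Nat.ltb k0 _); [|lra]. apply Rdiv_le_0_compat; [apply Rabs_pos|apply eta_bounds]. }
  assert (Hf : forall u, (h + I * Hop <= u)%nat -> (u <= k0 + (I * Hop + 2 * (T + D)))%nat -> delta <= om h u / P u).
  { intros u Hu1 Hu2. pose proof (om_lower h Hh Hh3 u Hu1). destruct (P_pos u). pose proof (P_le u).
    assert (mbar ^ (LL + BB) <= mbar ^ (u - h)) by (apply pow_le1; [lra|unfold LL, BB; lia]).
    pose proof c0_bounds. pose proof (INR_pos I HI1).
    assert (Hom : c0 * mbar ^ (LL + BB) <= om h u) by nra.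
    unfold delta. apply Rle_trans with (om h u / INR I). unfold Rdiv. apply Rmult_le_compat_r; [left; apply Rinv_0_lt_compat; lra|lra].
    apply div_mono. apply om_nn. lra. }
  assert (HVh : m0 <= Q h / P h <= M0) by (apply Hwin'; lia).
  pose proof (Hup t ltac:(lia)). pose proof (Hlow t' ltac:(lia)). pose proof (Hp t ltac:(lia) ltac:(lia)). pose proof (Hp t' ltac:(lia) ltac:(lia)).
  pose proof (Hf t ltac:(lia) ltac:(lia)). pose proof (Hf t' ltac:(lia) ltac:(lia)). pose proof delta_bounds.
  fold pS. nra. Qed.


Lemma crude (Q e z0 : nat -> R) X0 :
  (forall k, Q k = (match prevact act k (act k) with Some _ => 0 | None => z0 (act k) end) + rsum k (fun s => W k s * Q s) + e k) ->
  (forall i, (i < I)%nat -> Rabs (z0 i) <= X0) ->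
  forall t, Rabs (Q t) <= P t * (X0 + rsum (S t) (fun l => Rabs (e l) / eta)).
Proof. intros HQ HX. assert (HX0 : 0 <= X0) by (pose proof (HX 0%nat HI1); pose proof (Rabs_pos (z0 0%nat)); lra).
  assert (Hsc9 : forall m, 0 <= rsum m (fun l => Rabs (e l) / eta)).
  { intros m. apply rsum_nonneg. intros. apply Rdiv_le_0_compat; [apply Rabs_pos|apply eta_bounds]. }
  apply strong_ind. intros t IH. set (Sc' := rsum t (fun l => Rabs (e l) / eta)).
  assert (Hs : forall s, (s < t)%nat -> rsum (S s) (fun l => Rabs (e l) / eta) <= Sc').
  { intros s Hs. apply rsum_mono_len. lia. intros. apply Rdiv_le_0_compat; [apply Rabs_pos|apply eta_bounds]. }
  assert (H1 : Rabs (rsum t (fun s => W t s * Q s)) <= (X0 + Sc') * rsum t (fun s => W t s * P s)).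
  { eapply Rle_trans. apply rsum_abs. rewrite <- rsum_scal. apply rsum_le. intros s Hs0. rewrite Rabs_mult.
    rewrite (Rabs_right (W t s)) by (apply Rle_ge, W_nn). pose proof (IH s Hs0). pose proof (Hs s Hs0). pose proof (W_nn t s).
    destruct (P_pos s). apply Rle_trans with (W t s * (P s * (X0 + rsum (S s) (fun l => Rabs (e l) / eta)))).
    apply Rmult_le_compat_l; auto. assert (0 <= W t s * P s) by nra. nra. }
  pose proof (HQ t) as HQt. pose proof (HP t) as HPt. destruct (P_pos t) as [HPp _].
  assert (He : Rabs (e t) <= P t * (Rabs (e t) / eta)).
  { pose proof eta_bounds. pose proof (P_lower t). unfold Rdiv. rewrite <- Rmult_assoc. 
    apply Rmult_le_reg_r with eta. lra. rewrite Rmult_assoc, Rinv_l by lra. pose proof (Rabs_pos (e t)). nra. }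
  replace (rsum (S t) (fun l => Rabs (e l) / eta)) with (Sc' + Rabs (e t) / eta) by reflexivity.
  pose proof (Hsc9 t) as Hsc9t. fold Sc' in Hsc9t.
  pose proof (Rabs_triang (rsum t (fun s => W t s * Q s)) (e t)) as T1.
  destruct (prevact act t (act t)) eqn:Hp.
  - rewrite Rplus_0_l in HQt, HPt. rewrite HQt. rewrite HPt in He |- *. nra.
  - pose proof (Rabs_triang (z0 (act t)) (rsum t (fun s => W t s * Q s))) as T2. pose proof (HX (act t) (Hact t)).
    pose proof (Rabs_triang (z0 (act t) + rsum t (fun s => W t s * Q s)) (e t)) as T3.
    rewrite HQt. rewrite HPt in He |- *. nra. Qed.

Lemma bernoulli a n : 0 <= a <= 1 -> 1 - INR n * a <= (1 - a) ^ n.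
Proof. intros Ha. induction n. simpl; lra. rewrite S_INR. simpl. pose proof (pos_INR n). nra. Qed.

Lemma LL_pos : (1 <= LL)%nat.
Proof. unfold LL, BB. lia. Qed.

Definition rho := 1 - delta / (2 * INR LL).
Definition K0 := (T + BB)%nat.
Definition C1c := 2 / (eta * rho ^ (K0 + LL)).
Definition C2c := 4 / (eta * delta * rho ^ (LL + BB)).
Definition Cc := C1c + C2c.
Definition Gk (X0 : R) (e : nat -> R) k := rho ^ k * X0 + rsum (S k) (fun l => rho ^ (k - l) * Rabs (e l)).

Lemma rho_bounds : 0 < rho < 1 /\ 1 - delta / 2 <= rho ^ LL.
Proof. pose proof delta_bounds. pose proof (INR_pos LL LL_pos). unfold rho.
  assert (0 < delta / (2 * INR LL)) by (apply Rdiv_lt_0_compat; lra).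
  assert (delta / (2 * INR LL) <= 1 / 2). { apply div_le. lra. assert (1 <= INR LL) by (apply (le_INR 1); apply LL_pos). nra. }
  split. lra. pose proof (bernoulli (delta / (2 * INR LL)) LL ltac:(lra)).
  replace (INR LL * (delta / (2 * INR LL))) with (delta / 2) in H3 by (field; lra). lra. Qed.

Lemma Cc_pos : 0 < C1c /\ 0 < C2c.
Proof. destruct rho_bounds as [[H1 H2] _]. pose proof eta_bounds. pose proof delta_bounds. unfold C1c, C2c.
  pose proof (pow_lt rho (K0 + LL) H1). pose proof (pow_lt rho (LL + BB) H1). split; apply Rdiv_lt_0_compat; try lra.
  apply Rmult_lt_0_compat; lra. apply Rmult_lt_0_compat; [|lra]. apply Rmult_lt_0_compat; lra. Qed.

Lemma Gk_nn X0 e k : 0 <= X0 -> 0 <= Gk X0 e k.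
Proof. intros HX. destruct rho_bounds as [[H1 H2] _]. unfold Gk. assert (0 <= rho ^ k) by (apply pow_le; lra).
  assert (0 <= rsum (S k) (fun l => rho ^ (k - l) * Rabs (e l))).
  { apply rsum_nonneg. intros. apply Rmult_le_pos. apply pow_le; lra. apply Rabs_pos. } nra. Qed.

Lemma Gk_step X0 e k0 : 0 <= X0 -> rho ^ LL * Gk X0 e k0 <= Gk X0 e (k0 + LL).
Proof. intros HX. destruct rho_bounds as [[H1 H2] _]. unfold Gk. rewrite Rmult_plus_distr_l.
  rewrite <- Rmult_assoc, <- pow_add. replace (LL + k0)%nat with (k0 + LL)%nat by lia.
  rewrite <- rsum_scal. assert (rsum (S k0) (fun i => rho ^ LL * (rho ^ (k0 - i) * Rabs (e i)))
     <= rsum (S (k0 + LL)) (fun l => rho ^ (k0 + LL - l) * Rabs (e l))).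
  { apply Rle_trans with (rsum (S k0) (fun l => rho ^ (k0 + LL - l) * Rabs (e l))).
    apply rsum_le. intros l Hl. rewrite <- Rmult_assoc, <- pow_add. replace (LL + (k0 - l))%nat with (k0 + LL - l)%nat by lia. lra.
    apply rsum_mono_len. lia. intros. apply Rmult_le_pos. apply pow_le; lra. apply Rabs_pos. }
  lra. Qed.

Lemma iterate (Q e z0 : nat -> R) X0 :
  (forall k, Q k = (match prevact act k (act k) with Some _ => 0 | None => z0 (act k) end) + rsum k (fun s => W k s * Q s) + e k) ->
  (forall i, (i < I)%nat -> Rabs (z0 i) <= X0) ->
  forall k s s', (s <= k)%nat -> (k < s + 2 * BB)%nat -> (s' <= k)%nat -> (k < s' + 2 * BB)%nat ->
    Q s / P s - Q s' / P s' <= Cc * Gk X0 e k.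
Proof. intros HQ HX. assert (HX0 : 0 <= X0) by (pose proof (HX 0%nat HI1); pose proof (Rabs_pos (z0 0%nat)); lra).
  destruct rho_bounds as [[Hr1 Hr2] HrL]. pose proof eta_bounds. pose proof delta_bounds. pose proof Cc_pos.
  assert (HQ' : forall t, (T <= t)%nat -> Q t = rsum t (fun s => W t s * Q s) + e t).
  { intros t Ht. rewrite HQ. destruct (prev_recent t (act t) Ht (Hact t)) as [p [Hp _]]. rewrite Hp. lra. }
  apply (strong_ind (fun k => forall s s', (s <= k)%nat -> (k < s + 2 * BB)%nat -> (s' <= k)%nat -> (k < s' + 2 * BB)%nat ->
    Q s / P s - Q s' / P s' <= Cc * Gk X0 e k)). intros k IH s s' Hs1 Hs2 Hs1' Hs2'.
  destruct (le_lt_dec (K0 + LL) k) as [Hk|Hk].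
  - set (k0 := (k - LL)%nat). assert (Hkk : k = (k0 + LL)%nat) by (unfold k0; lia).
    assert (Hc := CS Q e HQ' k0 (Cc * Gk X0 e k0) ltac:(unfold K0 in Hk; unfold k0; lia)
      ltac:(intros; apply IH; auto; unfold k0; pose proof LL_pos; lia) s s' ltac:(lia) ltac:(lia) ltac:(lia) ltac:(lia)).
    rewrite <- Hkk in Hc.
    set (pS := rsum (S k) (fun l => if Nat.ltb k0 (l + BB) then Rabs (e l) / eta else 0)). fold pS in Hc.
    assert (HpS : pS <= 1 / (eta * rho ^ (LL + BB)) * Gk X0 e k).
    { unfold pS, Gk. assert (0 <= rho ^ k * X0) by (apply Rmult_le_pos; [apply pow_le|]; lra).
      assert (rsum (S k) (fun l => if Nat.ltb k0 (l + BB) then Rabs (e l) / eta else 0)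
        <= 1 / (eta * rho ^ (LL + BB)) * rsum (S k) (fun l => rho ^ (k - l) * Rabs (e l))).
      { rewrite <- rsum_scal. apply rsum_le. intros l Hl. pose proof (Rabs_pos (e l)). pose proof (pow_lt rho (LL + BB) Hr1).
        assert (0 <= rho ^ (k - l)) by (apply pow_le; lra).
        destruct (Nat.ltb_spec k0 (l + BB)).
        - assert (rho ^ (LL + BB) <= rho ^ (k - l)) by (apply pow_le1; [lra|unfold k0 in *; lia]).
          unfold Rdiv. rewrite Rmult_1_l. rewrite Rinv_mult.
          replace (/ eta * / rho ^ (LL + BB) * (rho ^ (k - l) * Rabs (e l))) with ((Rabs (e l) * / eta) * (rho ^ (k - l) / rho ^ (LL + BB))) by (unfold Rdiv; ring).
          assert (1 <= rho ^ (k - l) / rho ^ (LL + BB)) by (apply le_div; lra).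
          assert (0 <= Rabs (e l) * / eta) by (apply Rmult_le_pos; [lra|left; apply Rinv_0_lt_compat; lra]). nra.
        - apply Rmult_le_pos. apply Rdiv_le_0_compat; [lra|apply Rmult_lt_0_compat; lra]. nra. }
      assert (0 <= 1 / (eta * rho ^ (LL + BB))) by (apply Rdiv_le_0_compat; [lra|apply Rmult_lt_0_compat; [lra|apply pow_lt; lra]]).
      nra. }
    assert (HG0 := Gk_step X0 e k0 HX0). rewrite <- Hkk in HG0. pose proof (Gk_nn X0 e k0 HX0). pose proof (Gk_nn X0 e k HX0).
    assert (Hs1x : (1 - delta) * (Cc * Gk X0 e k0) <= (1 - delta / 2) * Cc * Gk X0 e k).
    { assert (1 - delta <= (1 - delta / 2) * rho ^ LL) by nra. assert (0 <= Cc * Gk X0 e k0) by (unfold Cc; nra).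
      apply Rle_trans with ((1 - delta / 2) * rho ^ LL * (Cc * Gk X0 e k0)). nra.
      replace ((1 - delta / 2) * rho ^ LL * (Cc * Gk X0 e k0)) with (((1 - delta/2) * Cc) * (rho ^ LL * Gk X0 e k0)) by ring.
      apply Rmult_le_compat_l; [unfold Cc; nra | lra]. }
    assert (Hs2x : 2 * pS <= delta / 2 * Cc * Gk X0 e k).
    { apply Rle_trans with (delta / 2 * C2c * Gk X0 e k).
      unfold C2c. replace (delta / 2 * (4 / (eta * delta * rho ^ (LL + BB))) * Gk X0 e k) with (2 * (1 / (eta * rho ^ (LL + BB)) * Gk X0 e k)).
      lra. field. split; [|split]; try lra. apply Rgt_not_eq, pow_lt; lra. unfold Cc. apply Rmult_le_compat_r; [auto|]. nra. }
    lra.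
  - assert (Hcr := crude Q e z0 X0 HQ HX).
    assert (HV : forall q, (q <= k)%nat -> Rabs (Q q / P q) <= X0 + rsum (S k) (fun l => Rabs (e l) / eta)).
    { intros q Hq. destruct (P_pos q). rewrite Rabs_div_pos by lra. apply div_le; auto.
      assert (rsum (S q) (fun l => Rabs (e l) / eta) <= rsum (S k) (fun l => Rabs (e l) / eta)).
      { apply rsum_mono_len. lia. intros; apply Rdiv_le_0_compat; [apply Rabs_pos|lra]. }
      pose proof (Hcr q). nra. }
    pose proof (HV s Hs1). pose proof (HV s' Hs1'). pose proof (Rle_abs (Q s / P s)). pose proof (Rle_abs (- (Q s' / P s'))).
    rewrite Rabs_Ropp in H5.
    assert (Hm : forall m, (m <= K0 + LL)%nat -> 2 / eta <= C1c * rho ^ m).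
    { intros m Hm. unfold C1c. pose proof (pow_lt rho (K0 + LL) Hr1). assert (rho ^ (K0 + LL) <= rho ^ m) by (apply pow_le1; [lra|lia]).
      unfold Rdiv. rewrite Rinv_mult. replace (2 * (/ eta * / rho ^ (K0 + LL)) * rho ^ m) with ((2 * / eta) * (rho ^ m / rho ^ (K0 + LL))) by (unfold Rdiv; ring).
      assert (1 <= rho ^ m / rho ^ (K0 + LL)) by (apply le_div; lra).
      assert (0 <= 2 * / eta) by (left; apply Rmult_lt_0_compat; [lra|apply Rinv_0_lt_compat; lra]). nra. }
    assert (Hb : 2 * X0 + 2 * rsum (S k) (fun l => Rabs (e l) / eta) <= C1c * Gk X0 e k).
    { unfold Gk. rewrite Rmult_plus_distr_l. rewrite <- (rsum_scal (S k) C1c). rewrite <- (rsum_scal (S k) 2).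
      assert (2 * X0 <= C1c * (rho ^ k * X0)). { pose proof (Hm k ltac:(lia)). assert (2 <= 2 / eta) by (apply le_div; lra). nra. }
      assert (rsum (S k) (fun i => 2 * (Rabs (e i) / eta)) <= rsum (S k) (fun i => C1c * (rho ^ (k - i) * Rabs (e i)))).
      { apply rsum_le. intros l Hl. pose proof (Hm (k - l)%nat ltac:(lia)). pose proof (Rabs_pos (e l)).
        replace (2 * (Rabs (e l) / eta)) with (2 / eta * Rabs (e l)) by (field; lra). nra. }
      lra. }
    pose proof (Gk_nn X0 e k HX0). unfold Cc. nra.
Qed.

Lemma final_step (Q e z0 mz : nat -> R) X0 :
  (forall k, Q k = (match prevact act k (act k) with Some _ => 0 | None => z0 (act k) end) + rsum k (fun s => W k s * Q s) + e k) ->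
  (forall i, (i < I)%nat -> Rabs (z0 i) <= X0) ->
  (forall k, mz k = rsum I (fun i => match prevact act k i with Some _ => 0 | None => z0 i end) + rsum k (fun s => Wm k s * Q s)) ->
  forall k p, (T <= S k)%nat -> (p <= k)%nat -> (S k <= p + T)%nat ->
    Rabs (Q p / P p - mz (S k) / INR I) <= Cc * Gk X0 e k.
Proof. intros HQ HX Hm k p Hk Hp1 Hp2.
  assert (HX0 : 0 <= X0) by (pose proof (HX 0%nat HI1); pose proof (Rabs_pos (z0 0%nat)); lra).
  pose proof (iterate Q e z0 X0 HQ HX k) as Hit. pose proof (INR_pos I HI1).
  set (V := fun s => Q s / P s).
  assert (HmI : INR I = rsum (S k) (fun s => Wm (S k) s * P s)). { rewrite (HmP (S k)). rewrite base_zero by auto. lra. }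
  assert (Hmz : mz (S k) = rsum (S k) (fun s => Wm (S k) s * P s * V s)).
  { rewrite Hm. rewrite base_zero by auto. rewrite Rplus_0_l. apply rsum_ext. intros s _. unfold V. field. apply P_neq. }
  assert (Hdiff : INR I * V p - mz (S k) = rsum (S k) (fun s => Wm (S k) s * P s * (V p - V s))).
  { rewrite Hmz, HmI. rewrite Rmult_comm. rewrite <- rsum_scal, <- rsum_minus. apply rsum_ext. intros; ring. }
  assert (Hb : Rabs (INR I * V p - mz (S k)) <= Cc * Gk X0 e k * INR I).
  { rewrite Hdiff. eapply Rle_trans. apply rsum_abs. rewrite HmI. rewrite <- rsum_scal. apply rsum_le. intros s Hs.
    pose proof (Wm_nn (S k) s). destruct (P_pos s). rewrite Rabs_mult. rewrite (Rabs_right (Wm (S k) s * P s)) by nra.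
    destruct (le_lt_dec (s + T + D) (S k)).
    - destruct (Nat.eq_dec (s + T + D) (S k)).
      + assert (Rabs (V p - V s) <= Cc * Gk X0 e k).
        { unfold V. apply Rabs_le. split. assert (Q s / P s - Q p / P p <= Cc * Gk X0 e k) by (apply Hit; unfold BB; lia). lra.
          apply Hit; unfold BB; lia. }
        assert (0 <= Wm (S k) s * P s) by nra. nra.
      + rewrite Wm_zero by lia. assert (0 <= Cc * Gk X0 e k). { pose proof Cc_pos. pose proof (Gk_nn X0 e k HX0). unfold Cc. nra. }
        rewrite !Rmult_0_l. lra.
    - assert (Rabs (V p - V s) <= Cc * Gk X0 e k).
      { unfold V. apply Rabs_le. split. assert (Q s / P s - Q p / P p <= Cc * Gk X0 e k) by (apply Hit; unfold BB; lia). lra.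
        apply Hit; unfold BB; lia. }
      assert (0 <= Wm (S k) s * P s) by nra. nra. }
  replace (Q p / P p - mz (S k) / INR I) with ((INR I * V p - mz (S k)) / INR I) by (unfold V; field; split; [lra|apply P_neq]).
  rewrite Rabs_div_pos by lra. apply div_le; auto. Qed.

End Kern.


Lemma CS_ineq n (f g : nat -> R) : (rsum n (fun c => f c * g c)) ^ 2 <= rsum n (fun c => f c ^ 2) * rsum n (fun c => g c ^ 2).
Proof.
  assert (H : 0 <= rsum n (fun i => rsum n (fun j => (f i * g j - f j * g i) ^ 2))).
  { apply rsum_nonneg; intros; apply rsum_nonneg; intros. apply pow2_ge_0. }
  rewrite (rsum_ext n _ (fun i => rsum n (fun j => f i ^ 2 * g j ^ 2) + rsum n (fun j => g i ^ 2 * f j ^ 2)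
     - 2 * (f i * g i) * rsum n (fun j => f j * g j))) in H.
  2:{ intros i Hi. rewrite <- !rsum_scal. rewrite <- rsum_plus, <- rsum_minus. apply rsum_ext. intros; ring. }
  rewrite rsum_minus, rsum_plus in H.
  rewrite (rsum_ext n (fun i => rsum n (fun j => f i ^ 2 * g j ^ 2)) (fun i => f i ^ 2 * rsum n (fun j => g j ^ 2))) in H
    by (intros; apply rsum_scal).
  rewrite (rsum_ext n (fun i => rsum n (fun j => g i ^ 2 * f j ^ 2)) (fun i => g i ^ 2 * rsum n (fun j => f j ^ 2))) in H
    by (intros; apply rsum_scal).
  rewrite (rsum_ext n (fun i => 2 * (f i * g i) * rsum n (fun j => f j * g j)) (fun i => (2 * rsum n (fun j => f j * g j)) * (f i * g i))) in H
    by (intros; ring).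
  rewrite (rsum_ext n (fun i => f i ^ 2 * rsum n (fun j => g j ^ 2)) (fun i => rsum n (fun j => g j ^ 2) * f i ^ 2)) in H by (intros; ring).
  rewrite (rsum_ext n (fun i => g i ^ 2 * rsum n (fun j => f j ^ 2)) (fun i => rsum n (fun j => f j ^ 2) * g i ^ 2)) in H by (intros; ring).
  rewrite !rsum_scal in H. nra. Qed.

Lemma vnorm_nn n v : 0 <= vnorm n v.
Proof. apply sqrt_pos. Qed.

Lemma vnorm_sq n v : vnorm n v ^ 2 = rsum n (fun c => v c ^ 2).
Proof. unfold vnorm. rewrite <- Rsqr_pow2. apply Rsqr_sqrt. apply rsum_nonneg; intros; apply pow2_ge_0. Qed.

Lemma sqrt_le_of_sq a b : 0 <= a -> 0 <= b -> a <= b ^ 2 -> sqrt a <= b.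
Proof. intros Ha Hb H. rewrite <- (sqrt_pow2 b Hb). apply sqrt_le_1; auto. apply pow2_ge_0. Qed.

Lemma vnorm_triang n (f g : vec) : vnorm n (fun c => f c + g c) <= vnorm n f + vnorm n g.
Proof. unfold vnorm at 1. apply sqrt_le_of_sq. apply rsum_nonneg; intros; apply pow2_ge_0.
  pose proof (vnorm_nn n f); pose proof (vnorm_nn n g); lra.
  pose proof (CS_ineq n f g). pose proof (vnorm_sq n f). pose proof (vnorm_sq n g).
  rewrite (rsum_ext n _ (fun c => f c ^ 2 + g c ^ 2 + 2 * (f c * g c))) by (intros; ring).
  rewrite !rsum_plus, rsum_scal. rewrite <- H0, <- H1 in H.
  pose proof (vnorm_nn n f); pose proof (vnorm_nn n g).
  set (S := rsum n (fun c => f c * g c)) in *. assert (S <= vnorm n f * vnorm n g).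
  { destruct (Rle_dec S 0). nra. assert (S ^ 2 <= (vnorm n f * vnorm n g) ^ 2) by (rewrite Rpow_mult_distr; auto).
    assert (0 <= vnorm n f * vnorm n g) by nra. destruct (Rle_dec S (vnorm n f * vnorm n g)); auto.
    assert ((vnorm n f * vnorm n g) ^ 2 < S ^ 2). { simpl. rewrite !Rmult_1_r. apply Rmult_le_0_lt_compat; lra. } lra. }
  nra. Qed.

Lemma vnorm_mono n (u w : vec) : (forall c, (c < n)%nat -> Rabs (u c) <= w c) -> vnorm n u <= vnorm n w.
Proof. intros H. unfold vnorm. apply sqrt_le_1. apply rsum_nonneg; intros; apply pow2_ge_0. apply rsum_nonneg; intros; apply pow2_ge_0.
  apply rsum_le. intros c Hc. specialize (H c Hc). pose proof (Rabs_pos (u c)). rewrite <- (pow2_abs (u c)). nra. Qed.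

Lemma vnorm_scal n a (u : vec) : 0 <= a -> vnorm n (fun c => a * u c) = a * vnorm n u.
Proof. intros Ha. unfold vnorm. rewrite (rsum_ext n _ (fun c => a ^ 2 * u c ^ 2)) by (intros; ring).
  rewrite rsum_scal. rewrite sqrt_mult. rewrite sqrt_pow2; auto. apply pow2_ge_0. apply rsum_nonneg; intros; apply pow2_ge_0. Qed.

Lemma vnorm_abs n (u : vec) : vnorm n (fun c => Rabs (u c)) = vnorm n u.
Proof. unfold vnorm. f_equal. apply rsum_ext. intros. apply pow2_abs. Qed.

Lemma vnorm_sum n M (b : nat -> R) (ws : nat -> vec) : (forall l, 0 <= b l) ->
  vnorm n (fun c => rsum M (fun l => b l * Rabs (ws l c))) <= rsum M (fun l => b l * vnorm n (ws l)).
Proof. intros Hb. induction M; simpl.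
  - unfold vnorm. rewrite rsum_zero. rewrite sqrt_0. lra. intros; simpl; ring.
  - eapply Rle_trans. apply (vnorm_triang n (fun c => rsum M (fun l => b l * Rabs (ws l c))) (fun c => b M * Rabs (ws M c))).
    rewrite vnorm_scal by auto. rewrite vnorm_abs. lra. Qed.

Lemma norm_combine n (q u : vec) a (b : nat -> R) (ws : nat -> vec) M : 0 <= a -> (forall l, 0 <= b l) ->
  (forall c, (c < n)%nat -> 0 <= u c) ->
  (forall c, (c < n)%nat -> Rabs (q c) <= a * u c + rsum M (fun l => b l * Rabs (ws l c))) ->
  vnorm n q <= a * vnorm n u + rsum M (fun l => b l * vnorm n (ws l)).
Proof. intros Ha Hb Hu H. eapply Rle_trans. apply (vnorm_mono n q (fun c => a * u c + rsum M (fun l => b l * Rabs (ws l c)))); auto.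
  eapply Rle_trans. apply vnorm_triang. rewrite vnorm_scal by auto. pose proof (vnorm_sum n M b ws Hb). lra. Qed.


Lemma hist_vec (f : nat -> vec) t c : hist vzero f t c = hist 0 (fun t => f t c) t.
Proof. unfold hist. destruct (t <=? 0)%Z; reflexivity. Qed.

Section Glue.
Variables (I D : nat) (E : nat -> nat -> bool) (A : nat -> nat -> R) (act : nat -> nat) (d : nat -> nat -> nat)
  (eps : nat -> vec) (z : nat -> nat -> vec) (phi : nat -> nat -> R)
  (rh rht : nat -> nat -> nat -> vec) (sig sigt : nat -> nat -> nat -> R) (tau : nat -> nat -> nat -> Z).
Hypothesis Hrun : is_run I D E A act d eps z phi rh rht sig sigt tau.

Definition xz c := fun k i => z k i c.
Definition rz c := fun k i j => rh k i j c.
Definition rtz c := fun k i j => rht k i j c.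
Definition ez c := fun k => eps k c.
Definition e0 := fun (_ : nat) => 0.

Lemma zhalf_hh c k : zhalf I E eps z rh rht tau k (act k) c = hh I E act tau (xz c) (rz c) (rtz c) (ez c) k.
Proof. unfold zhalf, hh, xz, rz, rtz, ez. f_equal. f_equal. apply rsum_ext. intros j _. destruct (E j (act k)); auto.
  rewrite hist_vec. reflexivity. Qed.

Lemma phihalf_hh k : phihalf I E phi sig sigt tau k (act k) = hh I E act tau phi sig sigt e0 k.
Proof. unfold phihalf, hh, e0. ring. Qed.

Lemma G_tau1 : forall k j, E j (act k) = true ->
  tau k (act k) j = Z.max (tau_prev D tau k (act k) j) (Z.of_nat k - Z.of_nat (d k j))%Z.
Proof. intros k. destruct Hrun as [_ [_ H]]. apply (H k). Qed.
Lemma G_tau2 : forall k i j, E j i = true -> i <> act k -> tau k i j = tau_prev D tau k i j.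
Proof. intros k. destruct Hrun as [_ [_ H]]. apply (H k). Qed.

Lemma Gz_r0 c : forall i j, E j i = true -> rz c 0%nat i j = 0 /\ rtz c 0%nat i j = 0.
Proof. intros i j He. destruct Hrun as [_ [H _]]. destruct (H i j He) as [H1 [_ [H3 _]]]. unfold rz, rtz. rewrite H1, H3. split; reflexivity. Qed.
Lemma Gz_x c : forall k, xz c (S k) (act k) = A (act k) (act k) * hh I E act tau (xz c) (rz c) (rtz c) (ez c) k.
Proof. intros k. destruct Hrun as [_ [_ H]]. destruct (H k) as [_ [_ [H3 _]]]. unfold xz at 1. rewrite H3. rewrite <- zhalf_hh. reflexivity. Qed.
Lemma Gz_rs c : forall k j, E (act k) j = true -> rz c (S k) j (act k) = rz c k j (act k) + A j (act k) * hh I E act tau (xz c) (rz c) (rtz c) (ez c) k.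
Proof. intros k j He. destruct Hrun as [_ [_ H]]. destruct (H k) as [_ [_ [_ [_ [H5 _]]]]]. destruct (H5 j He) as [H5a _].
  unfold rz at 1. rewrite H5a. rewrite <- zhalf_hh. reflexivity. Qed.
Lemma Gz_rt c : forall k j, E j (act k) = true -> rtz c (S k) (act k) j = hist 0 (fun t => rz c t (act k) j) (tau k (act k) j).
Proof. intros k j He. destruct Hrun as [_ [_ H]]. destruct (H k) as [_ [_ [_ [_ [_ [H6 _]]]]]]. destruct (H6 j He) as [H6a _].
  unfold rtz. rewrite H6a. apply hist_vec. Qed.
Lemma Gz_xo c : forall k i, (i < I)%nat -> i <> act k -> xz c (S k) i = xz c k i.
Proof. intros k i Hi Hne. destruct Hrun as [_ [_ H]]. destruct (H k) as [_ [_ [_ [_ [_ [_ [H7 _]]]]]]]. unfold xz. rewrite (proj1 (H7 i Hi Hne)). reflexivity. Qed.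
Lemma Gz_ro c : forall k i j, E j i = true -> j <> act k -> rz c (S k) i j = rz c k i j.
Proof. intros k i j He Hne. destruct Hrun as [_ [_ H]]. destruct (H k) as [_ [_ [_ [_ [_ [_ [_ [H8 _]]]]]]]]. unfold rz. rewrite (proj1 (H8 i j He Hne)). reflexivity. Qed.
Lemma Gz_rto c : forall k i j, E j i = true -> i <> act k -> rtz c (S k) i j = rtz c k i j.
Proof. intros k i j He Hne. destruct Hrun as [_ [_ H]]. destruct (H k) as [_ [_ [_ [_ [_ [_ [_ [_ H9]]]]]]]]. unfold rtz. rewrite (proj1 (H9 i j He Hne)). reflexivity. Qed.

Lemma Gp_r0 : forall i j, E j i = true -> sig 0%nat i j = 0 /\ sigt 0%nat i j = 0.
Proof. intros i j He. destruct Hrun as [_ [H _]]. destruct (H i j He) as [_ [H2 [_ H4]]]. auto. Qed.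
Lemma Gp_x : forall k, phi (S k) (act k) = A (act k) (act k) * hh I E act tau phi sig sigt e0 k.
Proof. intros k. destruct Hrun as [_ [_ H]]. destruct (H k) as [_ [_ [_ [H4 _]]]]. rewrite H4. rewrite <- phihalf_hh. reflexivity. Qed.
Lemma Gp_rs : forall k j, E (act k) j = true -> sig (S k) j (act k) = sig k j (act k) + A j (act k) * hh I E act tau phi sig sigt e0 k.
Proof. intros k j He. destruct Hrun as [_ [_ H]]. destruct (H k) as [_ [_ [_ [_ [H5 _]]]]]. destruct (H5 j He) as [_ H5b].
  rewrite H5b. rewrite <- phihalf_hh. reflexivity. Qed.
Lemma Gp_rt : forall k j, E j (act k) = true -> sigt (S k) (act k) j = hist 0 (fun t => sig t (act k) j) (tau k (act k) j).
Proof. intros k j He. destruct Hrun as [_ [_ H]]. destruct (H k) as [_ [_ [_ [_ [_ [H6 _]]]]]]. apply (H6 j He). Qed.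
Lemma Gp_xo : forall k i, (i < I)%nat -> i <> act k -> phi (S k) i = phi k i.
Proof. intros k i Hi Hne. destruct Hrun as [_ [_ H]]. destruct (H k) as [_ [_ [_ [_ [_ [_ [H7 _]]]]]]]. apply (H7 i Hi Hne). Qed.
Lemma Gp_ro : forall k i j, E j i = true -> j <> act k -> sig (S k) i j = sig k i j.
Proof. intros k i j He Hne. destruct Hrun as [_ [_ H]]. destruct (H k) as [_ [_ [_ [_ [_ [_ [_ [H8 _]]]]]]]]. apply (H8 i j He Hne). Qed.
Lemma Gp_rto : forall k i j, E j i = true -> i <> act k -> sigt (S k) i j = sigt k i j.
Proof. intros k i j He Hne. destruct Hrun as [_ [_ H]]. destruct (H k) as [_ [_ [_ [_ [_ [_ [_ [_ H9]]]]]]]]. apply (H9 i j He Hne). Qed.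

End Glue.


Lemma mass_cons I D mbar E A act d eps z phi rh rht sig sigt tau :
  is_digraph I E -> compatible I E mbar A -> column_stochastic I A -> (forall k, (act k < I)%nat) ->
  is_run I D E A act d eps z phi rh rht sig sigt tau ->
  forall k c, mass I E z rh rht k c = rsum I (fun i => z 0%nat i c) + rsum k (fun t => eps t c).
Proof. intros Hdig Hcomp Hcs Hact Hrun k c. induction k.
  - unfold mass. simpl. rewrite (rsum_zero I (fun i => rsum I _)). lra. intros i _. apply rsum_zero. intros j _.
    destruct (E j i) eqn:He; [|reflexivity]. destruct (Gz_r0 I D E A act d eps z phi rh rht sig sigt tau Hrun c i j He) as [H1 H2].
    unfold rz, rtz in H1, H2. rewrite H1, H2. ring.
  - change (mass I E z rh rht (S k) c) with (massS I E (xz z c) (rz rh c) (rtz rht c) (S k)).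
    rewrite (L6 I E A act tau Hdig Hact (xz z c) (rz rh c) (rtz rht c) (ez eps c)
      (Gz_x _ _ _ _ _ _ _ _ _ _ _ _ _ _ Hrun c) (Gz_rs _ _ _ _ _ _ _ _ _ _ _ _ _ _ Hrun c)
      (Gz_rt _ _ _ _ _ _ _ _ _ _ _ _ _ _ Hrun c) (Gz_xo _ _ _ _ _ _ _ _ _ _ _ _ _ _ Hrun c)
      (Gz_ro _ _ _ _ _ _ _ _ _ _ _ _ _ _ Hrun c) (Gz_rto _ _ _ _ _ _ _ _ _ _ _ _ _ _ Hrun c)
      Hcs (proj2 (proj2 Hcomp)) k).
    change (massS I E (xz z c) (rz rh c) (rtz rht c) k) with (mass I E z rh rht k c). rewrite IHk. unfold ez. simpl. ring.
Qed.

Theorem theorem1 (mbar : R) (I T D nE : nat) :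
  0 < mbar < 1 -> (1 <= T)%nat -> (1 <= D)%nat ->
  exists rho C1 : R, 0 < rho < 1 /\ 0 < C1 /\
  forall (n : nat) (E : nat -> nat -> bool) (A : nat -> nat -> R)
    (act : nat -> nat) (d : nat -> nat -> nat) (eps : nat -> vec)
    (z : nat -> nat -> vec) (phi : nat -> nat -> R)
    (rh rht : nat -> nat -> nat -> vec) (sig sigt : nat -> nat -> nat -> R)
    (tau : nat -> nat -> nat -> Z),
    is_digraph I E -> strongly_connected I E -> num_edges I E = nE ->
    compatible I E mbar A -> column_stochastic I A ->
    asynchrony I T D E act d ->
    is_run I D E A act d eps z phi rh rht sig sigt tau ->
    (forall (i k : nat), (i < I)%nat ->
       ((2 * I - 1) * T + I * D - 1 <= k)%nat ->
       vnorm n (fun c => z (S k) i c / phi (S k) i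
                         - / INR I * mass I E z rh rht (S k) c)
       <= C1 * (rho ^ k * stacked_norm I n (z 0%nat)
                + rsum (S k) (fun l => rho ^ (k - l) * vnorm n (eps l)))) /\
    (forall (k c : nat),
       mass I E z rh rht k c = rsum I (fun i => z 0%nat i c) + rsum k (fun t => eps t c)).
Proof.
  intros Hmb HT HD.
  destruct (Nat.eq_dec I 0) as [HI0|HI0].
  { exists (1/2), 1. split; [lra|]. split; [lra|].
    intros n E A act d eps z phi rh rht sig sigt tau Hdig Hsc HnE Hcomp Hcs Has Hrun.
    split. intros i k Hi; lia. apply (mass_cons I D mbar E A act d eps z phi rh rht sig sigt tau); auto. apply Has. }
  assert (HI1 : (1 <= I)%nat) by lia.
  destruct (rho_bounds I T D mbar HI1 HT Hmb) as [[Hr1 Hr2] _].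
  destruct (Cc_pos I T D mbar HI1 HT Hmb) as [Hc1 Hc2].
  exists (rho I T D mbar), (Cc I T D mbar). split; [lra|]. split; [unfold Cc; lra|].
  intros n E A act d eps z phi rh rht sig sigt tau Hdig Hsc HnE Hcomp Hcs Has Hrun.
  destruct Has as [Hact [Hwin Hdel]].
  split; [|apply (mass_cons I D mbar E A act d eps z phi rh rht sig sigt tau); auto].
  intros i k Hi Hk.
  pose proof (G_tau1 I D E A act d eps z phi rh rht sig sigt tau Hrun) as Htau1.
  pose proof (G_tau2 I D E A act d eps z phi rh rht sig sigt tau Hrun) as Htau2.
  assert (Hphi0 : forall i, (i < I)%nat -> phi 0%nat i = 1) by apply Hrun.
  pose proof (Gp_r0 I D E A act d eps z phi rh rht sig sigt tau Hrun) as P0r.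
  pose proof (Gp_x I D E A act d eps z phi rh rht sig sigt tau Hrun) as P0x.
  pose proof (Gp_rs I D E A act d eps z phi rh rht sig sigt tau Hrun) as P0rs.
  pose proof (Gp_rt I D E A act d eps z phi rh rht sig sigt tau Hrun) as P0rt.
  pose proof (Gp_xo I D E A act d eps z phi rh rht sig sigt tau Hrun) as P0xo.
  pose proof (Gp_ro I D E A act d eps z phi rh rht sig sigt tau Hrun) as P0ro.
  pose proof (Gp_rto I D E A act d eps z phi rh rht sig sigt tau Hrun) as P0rto.
  set (P := hh I E act tau phi sig sigt e0).
  assert (HP : forall k, P k = (match prevact act k (act k) with Some _ => 0 | None => 1 end) + rsum k (fun s => W D E A act tau k s * P s)).
  { intros k'. unfold P. rewrite (L5 I D E A act d tau Hact Htau1 Htau2 phi sig sigt e0 P0r P0x P0rs P0rt P0xo P0ro P0rto k').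
    unfold base, e0. destruct (prevact act k' (act k')); [ring|]. rewrite Hphi0 by apply Hact. ring. }
  assert (HmP : forall k, INR I = rsum I (fun i => match prevact act k i with Some _ => 0 | None => 1 end) + rsum k (fun s => Wm I D E A act tau k s * P s)).
  { intros k'. assert (Hms : massS I E phi sig sigt k' = INR I).
    { induction k'.
      - unfold massS. rewrite (rsum_ext I (fun i => phi 0%nat i) (fun _ => 1)) by (intros; apply Hphi0; auto).
        rewrite rsum_const, (rsum_zero I (fun i => rsum I _)). ring. intros i' _. apply rsum_zero. intros j _.
        destruct (E j i') eqn:He; [|reflexivity]. destruct (P0r i' j He) as [H1 H2]. rewrite H1, H2. ring.
      - rewrite (L6 I E A act tau Hdig Hact phi sig sigt e0 P0x P0rs P0rt P0xo P0ro P0rto Hcs (proj2 (proj2 Hcomp)) k').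
        rewrite IHk'. unfold e0; ring. }
    rewrite <- Hms. rewrite (L7 I D E A act d tau Hact Htau1 Htau2 phi sig sigt e0 P0r P0x P0rs P0rt P0xo P0ro P0rto k').
    unfold basem. f_equal. apply rsum_ext. intros i' Hi'. destruct (prevact act k' i'); auto. }
  assert (HkT : (T <= S k)%nat). { assert ((2 * I - 1) * T >= T)%nat by nia. lia. }
  destruct (prev_recent I T act HI1 HT Hwin (S k) i HkT Hi) as [p [Hp Hpk]].
  destruct (prev_lt _ _ _ _ Hp) as [Hpk' _].
  set (X0 := fun c => sqrt (rsum I (fun i => z 0%nat i c ^ 2))).
  set (rr := rho I T D mbar). set (CC := Cc I T D mbar).
  assert (Hcoord : forall c, Rabs (z (S k) i c / phi (S k) i - / INR I * mass I E z rh rht (S k) c)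
     <= CC * (rr ^ k * X0 c + rsum (S k) (fun l => rr ^ (k - l) * Rabs (eps l c)))).
  { intros c.
    pose proof (Gz_r0 I D E A act d eps z phi rh rht sig sigt tau Hrun c) as Z0r.
    pose proof (Gz_x I D E A act d eps z phi rh rht sig sigt tau Hrun c) as Z0x.
    pose proof (Gz_rs I D E A act d eps z phi rh rht sig sigt tau Hrun c) as Z0rs.
    pose proof (Gz_rt I D E A act d eps z phi rh rht sig sigt tau Hrun c) as Z0rt.
    pose proof (Gz_xo I D E A act d eps z phi rh rht sig sigt tau Hrun c) as Z0xo.
    pose proof (Gz_ro I D E A act d eps z phi rh rht sig sigt tau Hrun c) as Z0ro.
    pose proof (Gz_rto I D E A act d eps z phi rh rht sig sigt tau Hrun c) as Z0rto.
    set (Q := hh I E act tau (xz z c) (rz rh c) (rtz rht c) (ez eps c)).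
    assert (HQ : forall k, Q k = (match prevact act k (act k) with Some _ => 0 | None => (fun i => z 0%nat i c) (act k) end)
       + rsum k (fun s => W D E A act tau k s * Q s) + ez eps c k).
    { intros k'. unfold Q. rewrite (L5 I D E A act d tau Hact Htau1 Htau2 _ _ _ _ Z0r Z0x Z0rs Z0rt Z0xo Z0ro Z0rto k'). reflexivity. }
    assert (HX : forall i, (i < I)%nat -> Rabs ((fun i => z 0%nat i c) i) <= X0 c).
    { intros i' Hi'. unfold X0. rewrite <- sqrt_Rsqr_abs. apply sqrt_le_1. apply Rle_0_sqr.
      apply rsum_nonneg; intros; apply pow2_ge_0. rewrite Rsqr_pow2.
      apply (rsum_ge_term I (fun i => z 0%nat i c ^ 2)); auto. intros; apply pow2_ge_0. }
    assert (HmQ : forall k, (fun k => mass I E z rh rht k c) k = rsum I (fun i => match prevact act k i with Some _ => 0 | None => (fun i => z 0%nat i c) i end)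
       + rsum k (fun s => Wm I D E A act tau k s * Q s)).
    { intros k'. change (mass I E z rh rht k' c) with (massS I E (xz z c) (rz rh c) (rtz rht c) k').
      rewrite (L7 I D E A act d tau Hact Htau1 Htau2 _ _ _ _ Z0r Z0x Z0rs Z0rt Z0xo Z0ro Z0rto k'). reflexivity. }
    pose proof (final_step I T D mbar E A act d tau Hdig Hsc HI1 HT Hmb Hact Hwin Hdel Htau1 Htau2 Hcomp Hcs P HP HmP
      Q (ez eps c) (fun i => z 0%nat i c) (fun k => mass I E z rh rht k c) (X0 c) HQ HX HmQ k p HkT ltac:(lia) ltac:(lia)) as Hf.
    assert (Hzp : z (S k) i c = A i i * Q p).
    { change (z (S k) i c) with (xz z c (S k) i). rewrite (L4 I E A act tau _ _ _ _ Z0x Z0xo (S k) i Hi). rewrite Hp. reflexivity. }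
    assert (Hpp : phi (S k) i = A i i * P p).
    { rewrite (L4 I E A act tau _ _ _ _ P0x P0xo (S k) i Hi). rewrite Hp. reflexivity. }
    assert (HAii : 0 < A i i). { destruct Hcomp as [H1 _]. specialize (H1 i Hi). lra. }
    destruct (P_pos I T D mbar E A act tau HI1 HT Hmb Hact Hcomp P HP p) as [HPp _].
    assert (HINR : 0 < INR I) by (apply lt_0_INR; lia).
    replace (z (S k) i c / phi (S k) i - / INR I * mass I E z rh rht (S k) c) with (Q p / P p - mass I E z rh rht (S k) c / INR I)
      by (rewrite Hzp, Hpp; field; repeat split; lra).
    unfold Gk in Hf. exact Hf. }
  assert (HX0n : forall c, (c < n)%nat -> 0 <= X0 c) by (intros; apply sqrt_pos).
  assert (Hrk : forall m, 0 <= rr ^ m) by (intros; apply pow_le; unfold rr; lra).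
  assert (HCC : 0 <= CC) by (unfold CC, Cc; lra).
  eapply Rle_trans.
  apply (norm_combine n _ X0 (CC * rr ^ k) (fun l => CC * rr ^ (k - l)) eps (S k)).
  - apply Rmult_le_pos; auto.
  - intros; apply Rmult_le_pos; auto.
  - auto.
  - intros c Hc. eapply Rle_trans. apply Hcoord. rewrite Rmult_plus_distr_l. rewrite <- rsum_scal.
    rewrite (rsum_ext (S k) (fun l => CC * (rr ^ (k - l) * Rabs (eps l c))) (fun l => CC * rr ^ (k - l) * Rabs (eps l c))) by (intros; ring).
    lra.
  - assert (Hvn : vnorm n X0 = stacked_norm I n (z 0%nat)).
    { unfold vnorm, stacked_norm, X0. f_equal. rewrite (rsum_ext n _ (fun c => rsum I (fun i => z 0%nat i c ^ 2))).
      apply rsum_exchange. intros c _. rewrite <- Rsqr_pow2. apply Rsqr_sqrt. apply rsum_nonneg; intros; apply pow2_ge_0. }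
    rewrite Hvn. rewrite (rsum_ext (S k) (fun l => CC * rr ^ (k - l) * vnorm n (eps l)) (fun l => CC * (rr ^ (k - l) * vnorm n (eps l)))) by (intros; ring).
    rewrite rsum_scal. right. ring.
Qed.
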